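(* Let $T$ be a complete first-order theory and $\pi(\bar x)$ a partial type over $\emptyset$ (with $\bar x$ a possibly infinite tuple of variables). Let $M$ and $M'$ be two $\aleph_0$-saturated and strongly $\aleph_0$-homogeneous models of $T$. If there is an $\mathrm{Aut}(M)$-invariant regular Borel probability measure on $S_\pi(M)=\{q\in S_{\bar x}(M):\pi\subseteq q\}$, then there is an $\mathrm{Aut}(M')$-invariant regular Borel probability measure on $S_\pi(M')$. In particular, amenability of $\pi$ does not depend on the choice of the monster model, and $\pi$ is amenable if and only if there is an $\mathrm{Aut}(M)$-invariant regular Borel probability measure on $S_\pi(M)$ for some (equivalently, any) $\aleph_0$-saturated and strongly $\aleph_0$-homogeneous model $M$.
   Context: A model $N$ is strongly $\aleph_0$-homogeneous if every partial elementary map between finite subsets of $N$ extends to an automorphism of $N$. $\mathrm{Aut}(N)$ acts on $S_\pi(N)$ by $\varphi(\bar x,\sigma(\bar b))\in\sigma q$ iff $\varphi(\bar x,\bar b)\in q$. A partial type $\pi(\bar x)$ over $\emptyset$ is amenable if there is an $\mathrm{Aut}(\mathfrak C)$-invariant regular Borel probability measure on $S_\pi(\mathfrak C)$, where $\mathfrak C$ is a monster model of $T$ ($\kappa$-saturated and strongly $\kappa$-homogeneous for a large $\kappa$). *)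

(* Defs.v *)
From Stdlib Require Import Reals List.
From Stdlib Require Fin.
Open Scope R_scope.

Record signature := {
  fsym : Type; farity : fsym -> nat;
  rsym : Type; rarity : rsym -> nat }.

Section FO.
Variable S : signature.

Inductive term (V : Type) : Type :=
  | TVar : V -> term V
  | TApp : forall f : fsym S, (Fin.t (farity S f) -> term V) -> term V.

(* formulas with free variables in V; FEx binds the variable None *)
Inductive formula (V : Type) : Type :=
  | FEq : term V -> term V -> formula V
  | FRel : forall r : rsym S, (Fin.t (rarity S r) -> term V) -> formula V
  | FNot : formula V -> formula V
  | FAnd : formula V -> formula V -> formula V
  | FEx : formula (option V) -> formula V.

Arguments TVar {V}. Arguments TApp {V}.
Arguments FEq {V}. Arguments FRel {V}. Arguments FNot {V}.
Arguments FAnd {V}. Arguments FEx {V}.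

Definition sentence := formula Empty_set.

Fixpoint tmap {V W : Type} (h : V -> W) (t : term V) : term W :=
  match t with
  | TVar v => TVar (h v)
  | TApp f args => TApp f (fun i => tmap h (args i))
  end.

Definition omap {V W : Type} (h : V -> W) (o : option V) : option W :=
  match o with Some v => Some (h v) | None => None end.

Fixpoint fmap {V W : Type} (h : V -> W) (phi : formula V) : formula W :=
  match phi with
  | FEq t u => FEq (tmap h t) (tmap h u)
  | FRel r args => FRel r (fun i => tmap h (args i))
  | FNot p => FNot (fmap h p)
  | FAnd p q => FAnd (fmap h p) (fmap h q)
  | FEx p => FEx (fmap (omap h) p)
  end.

Record structure := {
  carrier :> Type;
  carrier_inh : inhabited carrier;
  funs : forall f : fsym S, (Fin.t (farity S f) -> carrier) -> carrier;
  rels : forall r : rsym S, (Fin.t (rarity S r) -> carrier) -> Prop }.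

Fixpoint teval (M : structure) {V : Type} (e : V -> M) (t : term V) : M :=
  match t with
  | TVar v => e v
  | TApp f args => funs M f (fun i => teval M e (args i))
  end.

Definition ext {M : Type} {V : Type} (e : V -> M) (m : M) (o : option V) : M :=
  match o with Some v => e v | None => m end.

Fixpoint sat (M : structure) {V : Type} (e : V -> M) (phi : formula V) : Prop :=
  match phi with
  | FEq t u => teval M e t = teval M e u
  | FRel r args => rels M r (fun i => teval M e (args i))
  | FNot p => ~ sat M e p
  | FAnd p q => sat M e p /\ sat M e q
  | FEx p => exists m : M, sat M (ext e m) p
  end.

Definition no_var {M : Type} (v : Empty_set) : M := match v with end.

Definition models (M : structure) (T : sentence -> Prop) : Prop :=
  forall s, T s -> sat M no_var s.

Definition complete_theory (T : sentence -> Prop) : Prop :=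
  (exists M : structure, models M T) /\
  forall s : sentence,
    (forall M : structure, models M T -> sat M no_var s) \/
    (forall M : structure, models M T -> sat M no_var (FNot s)).

Definition partial_type (T : sentence -> Prop) (I : Type)
  (pi : formula I -> Prop) : Prop :=
  forall l : list (formula I), (forall phi, In phi l -> pi phi) ->
    exists (N : structure) (a : I -> N),
      models N T /\ forall phi, In phi l -> sat N a phi.

(* formulas phi(x, b) with parameters b from M live in formula (I + M);
   a parameter is interpreted as itself *)
Definition penv {I : Type} (M : structure) (a : I -> M) (v : I + M) : M :=
  match v with inl i => a i | inr m => m end.

Definition complete_type (I : Type) (M : structure)
  (q : formula (I + M) -> Prop) : Prop :=
  (forall l : list (formula (I + M)), (forall phi, In phi l -> q phi) ->
     exists a : I -> M, forall phi, In phi l -> sat M (penv M a) phi) /\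
  (forall phi, q phi \/ q (FNot phi)).

Definition Spi (I : Type) (pi : formula I -> Prop) (M : structure) : Type :=
  { q : formula (I + M) -> Prop |
    complete_type I M q /\ forall phi, pi phi -> q (fmap inl phi) }.

Section Space.
Variables (I : Type) (pi : formula I -> Prop) (M : structure).
Let X := Spi I pi M.

Definition sopen (U : X -> Prop) : Prop :=
  forall q : X, U q -> exists phi : formula (I + M),
    proj1_sig q phi /\ forall q' : X, proj1_sig q' phi -> U q'.

Definition scompact (K : X -> Prop) : Prop :=
  forall (J : Type) (U : J -> X -> Prop), (forall j, sopen (U j)) ->
    (forall q, K q -> exists j, U j q) ->
    exists l : list J, forall q, K q -> exists j, In j l /\ U j q.

Definition borel (B : X -> Prop) : Prop :=
  forall C : (X -> Prop) -> Prop,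
    (forall U, sopen U -> C U) ->
    (forall A, C A -> C (fun q => ~ A q)) ->
    (forall A : nat -> X -> Prop, (forall n, C (A n)) ->
       C (fun q => exists n, A n q)) ->
    C B.

Definition regular_borel_prob (mu : (X -> Prop) -> R) : Prop :=
  (forall B, borel B -> 0 <= mu B) /\
  mu (fun _ => True) = 1 /\
  (forall B : nat -> X -> Prop, (forall n, borel (B n)) ->
     (forall n m q, n <> m -> B n q -> B m q -> False) ->
     infinite_sum (fun n => mu (B n)) (mu (fun q => exists n, B n q))) /\
  (forall B, borel B -> forall eps, 0 < eps ->
     (exists K, scompact K /\ (forall q, K q -> B q) /\ mu B - eps < mu K) /\
     (exists U, sopen U /\ (forall q, B q -> U q) /\ mu U < mu B + eps)).

End Space.

Definition automorphism (M : structure) (s : M -> M) : Prop :=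
  (forall x y, s x = s y -> x = y) /\ (forall y, exists x, s x = y) /\
  (forall f args, s (funs M f args) = funs M f (fun i => s (args i))) /\
  (forall r args, rels M r args <-> rels M r (fun i => s (args i))).

Definition pmap {I : Type} {M : Type} (s : M -> M) (v : I + M) : I + M :=
  match v with inl i => inl i | inr m => inr (s m) end.

(* mu is Aut(M)-invariant for the action
   phi(x, s b) in s q  iff  phi(x, b) in q *)
Definition aut_invariant (I : Type) (pi : formula I -> Prop) (M : structure)
  (mu : (Spi I pi M -> Prop) -> R) : Prop :=
  forall s : M -> M, automorphism M s ->
  forall B : Spi I pi M -> Prop, borel I pi M B ->
    mu (fun q => exists q' : Spi I pi M, B q' /\
          forall phi : formula (I + M),
            proj1_sig q' (fmap (pmap s) phi) <-> proj1_sig q phi) = mu B.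

Definition aleph0_saturated (M : structure) : Prop :=
  forall (n : nat) (b : Fin.t n -> M) (p : formula (option (Fin.t n)) -> Prop),
    (forall l, (forall phi, In phi l -> p phi) ->
       exists m : M, forall phi, In phi l -> sat M (ext b m) phi) ->
    exists m : M, forall phi, p phi -> sat M (ext b m) phi.

Definition strongly_aleph0_homogeneous (M : structure) : Prop :=
  forall (n : nat) (a b : Fin.t n -> M),
    (forall phi : formula (Fin.t n), sat M a phi <-> sat M b phi) ->
    exists s : M -> M, automorphism M s /\ forall i, s (a i) = b i.

End FO.

(* Main.v *)
Require Import Defs.
From Stdlib Require Import Reals Lra Lia List Classical ClassicalEpsilon FunctionalExtensionality PropExtensionality ProofIrrelevance.
Open Scope R_scope.

Fixpoint psum (f : nat -> R) (N : nat) : R :=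
  match N with O => 0 | S n => psum f n + f n end.

Lemma psum_le f g N : (forall n, f n <= g n) -> psum f N <= psum g N.
Proof. intro H; induction N; simpl; [lra|]. specialize (H N); lra. Qed.

Lemma psum_plus f g N : psum (fun n => f n + g n) N = psum f N + psum g N.
Proof. induction N; simpl; lra. Qed.

Lemma psum_geom c N : psum (fun n => c * / 2 ^ S n) N + c * / 2 ^ N = c.
Proof.
  induction N. simpl. rewrite Rinv_1; ring.
  change (psum (fun n => c * / 2 ^ S n) (S N)) with (psum (fun n => c * / 2 ^ S n) N + c * / 2 ^ S N).
  rewrite <- IHN at 3.
  assert (2 ^ N <> 0) by (apply pow_nonzero; lra).
  assert (E : 2 ^ S N = 2 * 2 ^ N) by reflexivity. rewrite E. field; auto.
Qed.

Lemma psum_mono f N M : (forall n, 0 <= f n) -> (N <= M)%nat -> psum f N <= psum f M.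
Proof.
  intros H HNM; induction HNM; [lra|]. simpl. specialize (H m); lra.
Qed.

Lemma psum_sum f n : sum_f_R0 f n = psum f (S n).
Proof. induction n; simpl in *; [lra|]. rewrite IHn; simpl; lra. Qed.

Lemma le_eps x y : (forall eps, 0 < eps -> x <= y + eps) -> x <= y.
Proof.
  intro H. apply Rnot_lt_le; intro L. specialize (H ((x - y)/2)). lra.
Qed.


From HB Require structures.
From mathcomp Require all_boot all_order all_algebra.
From mathcomp Require boolp classical_sets functions reals ereal topology normedtype sequences measure_extension Rstruct.

Module CaraM.
Import HB.structures.
Import mathcomp.boot.all_boot mathcomp.order.all_order mathcomp.algebra.all_algebra.
Import boolp classical_sets functions reals ereal topology normedtype sequences measure_extension Rstruct.
Import Order.TTheory GRing.Theory Num.Theory.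
Local Open Scope classical_set_scope.
Section Cara.

Variable T : Type.
Variable m : (T -> Prop) -> R.
Hypothesis m0 : m (fun _ => False) = 0%R.
Hypothesis mge0 : forall A, Rle 0 (m A).
Hypothesis mmono : forall A B : T -> Prop, (forall x, A x -> B x) -> Rle (m A) (m B).
Hypothesis msub : forall (F : nat -> T -> Prop) eps, Rlt 0 eps ->
  exists N, Rle (m (fun x => exists n, F n x)) (Rplus (psum (fun i => m (F i)) N) eps).

Definition me (A : set T) : \bar R := (m A)%:E.

Lemma psumE f N : ((psum f N)%:E = \sum_(0 <= i < N) (f i)%:E)%E.
Proof.
elim: N => [|N IH]; first by rewrite big_geq.
by rewrite big_nat_recr //= -IH -EFinD.
Qed.

Lemma me0 : me set0 = 0%E.
Proof. by rewrite /me /set0 /= m0. Qed.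

Lemma me_ge0 A : (0 <= me A)%E.
Proof. by rewrite /me lee_fin; apply/RleP. Qed.

Lemma me_mono : {homo me : A B / A `<=` B >-> (A <= B)%E}.
Proof. by move=> A B AB; rewrite /me lee_fin; apply/RleP; apply: mmono. Qed.

Lemma me_sub : sigma_subadditive me.
Proof.
move=> F; apply/lee_addgt0Pr => e e0.
have e0' : Rlt 0 e by apply/RltP.
have [N HN] := msub F e e0'.
apply: (@le_trans _ _ ((psum (fun i => m (F i)) N)%:E + e%:E)%E).
  rewrite -EFinD /me lee_fin; apply/RleP.
  apply: Rle_trans HN; apply: mmono.
  by move=> x [n _ Fx]; exists n.
rewrite leeD2r // psumE.
by apply: nneseries_lim_ge => n _ _; exact: me_ge0.
Qed.

HB.instance Definition _ := isOuterMeasure.Build R T me me0 me_ge0 me_mono me_sub.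

Definition cara (A : T -> Prop) := caratheodory_measurable me A.

Lemma cara_suff A : (forall X, Rle (Rplus (m (fun x => X x /\ A x)) (m (fun x => X x /\ ~ A x))) (m X)) -> cara A.
Proof.
move=> H; apply: (le_caratheodory_measurable (mu := me)) => X.
by rewrite /me -EFinD lee_fin; apply/RleP; apply: H.
Qed.

Lemma cara_eq A X : cara A -> m X = Rplus (m (fun x => X x /\ A x)) (m (fun x => X x /\ ~ A x)).
Proof.
move=> /(_ X); rewrite /me -EFinD => -[] //.
Qed.

Lemma cara_C A : cara A -> cara (fun x => ~ A x).
Proof. move=> H; exact: (caratheodory_measurable_setC (mu := me) H). Qed.

Lemma cara_U (A : nat -> T -> Prop) : (forall n, cara (A n)) -> cara (fun x => exists n, A n x).
Proof.
move=> H.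
have := caratheodory_measurable_bigcup (mu := me) H.
have -> // : (\bigcup_n A n) = (fun x => exists n, A n x).
by apply/funext => x; apply/propext; split => [[n _ h]|[n h]]; exists n.
Qed.

End Cara.

End CaraM.

Section Gen.
Variables (X Phi : Type) (mem : X -> Phi -> Prop) (neg : Phi -> Phi)
  (cnj : Phi -> Phi -> Phi) (top : Phi).
Hypothesis mem_neg : forall q p, mem q (neg p) <-> ~ mem q p.
Hypothesis mem_conj : forall q p r, mem q (cnj p r) <-> mem q p /\ mem q r.
Hypothesis mem_top : forall q, mem q top.
Hypothesis compact : forall Sg : Phi -> Prop,
  (forall l : list Phi, (forall p, In p l -> Sg p) -> exists q, forall p, In p l -> mem q p) ->
  exists q, forall p, Sg p -> mem q p.
Variable lam : Phi -> R.
Hypothesis lam_ge0 : forall p, 0 <= lam p.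
Hypothesis lam_top : lam top = 1.
Hypothesis lam_mono : forall p r, (forall q, mem q p -> mem q r) -> lam p <= lam r.
Hypothesis lam_add : forall p r, lam p = lam (cnj p r) + lam (cnj p (neg r)).

Definition isopen (U : X -> Prop) : Prop :=
  forall q, U q -> exists p, mem q p /\ forall q', mem q' p -> U q'.

Definition iscompact (K : X -> Prop) : Prop :=
  forall (J : Type) (U : J -> X -> Prop), (forall j, isopen (U j)) ->
    (forall q, K q -> exists j, U j q) ->
    exists l : list J, forall q, K q -> exists j, In j l /\ U j q.

Definition isborel (B : X -> Prop) : Prop :=
  forall C : (X -> Prop) -> Prop,
    (forall U, isopen U -> C U) ->
    (forall A, C A -> C (fun q => ~ A q)) ->
    (forall A : nat -> X -> Prop, (forall n, C (A n)) ->
       C (fun q => exists n, A n q)) ->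
    C B.

Definition sub (A B : X -> Prop) := forall q, A q -> B q.

Lemma lam_ext p r : (forall q, mem q p <-> mem q r) -> lam p = lam r.
Proof. intro H; apply Rle_antisym; apply lam_mono; firstorder. Qed.

Lemma lam_le1 p : lam p <= 1.
Proof. rewrite <- lam_top; apply lam_mono; auto. Qed.

Definition bot := neg top.
Lemma mem_bot q : ~ mem q bot.
Proof. unfold bot; rewrite mem_neg; auto. Qed.

Lemma lam_empty p : (forall q, ~ mem q p) -> lam p = 0.
Proof.
  intro H. pose proof (lam_add p p) as E.
  assert (lam (cnj p p) = lam p) by (apply lam_ext; intro q; rewrite mem_conj; tauto).
  assert (lam (cnj p (neg p)) = lam p) by (apply lam_ext; intro q; rewrite mem_conj, mem_neg; firstorder).
  lra.
Qed.

Definition disj p r := neg (cnj (neg p) (neg r)).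
Lemma mem_disj q p r : mem q (disj p r) <-> mem q p \/ mem q r.
Proof. unfold disj; rewrite mem_neg, mem_conj, !mem_neg; tauto. Qed.

Lemma lam_disj_le p r : lam (disj p r) <= lam p + lam r.
Proof.
  rewrite (lam_add (disj p r) p).
  assert (lam (cnj (disj p r) p) <= lam p) by (apply lam_mono; intro q; rewrite mem_conj; tauto).
  assert (lam (cnj (disj p r) (neg p)) <= lam r) by
    (apply lam_mono; intro q; rewrite mem_conj, mem_neg, mem_disj; tauto).
  lra.
Qed.

Lemma lam_disj_eq p r : (forall q, mem q p -> mem q r -> False) -> lam (disj p r) = lam p + lam r.
Proof.
  intro D. rewrite (lam_add (disj p r) p).
  f_equal; apply lam_ext; intro q; rewrite mem_conj; try rewrite mem_neg; rewrite mem_disj; firstorder.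
Qed.

Definition Enu (U : X -> Prop) (x : R) := exists p, sub (fun q => mem q p) U /\ x = lam p.

Lemma Enu_bound U : bound (Enu U).
Proof. exists 1; intros x [p [_ ->]]; apply lam_le1. Qed.
Lemma Enu_ne U : exists x, Enu U x.
Proof. exists (lam bot); exists bot; split; auto. intros q H; exfalso; apply (mem_bot q H). Qed.

Definition nu (U : X -> Prop) : R := proj1_sig (completeness (Enu U) (Enu_bound U) (Enu_ne U)).

Lemma nu_spec U : is_lub (Enu U) (nu U).
Proof. exact (proj2_sig (completeness (Enu U) (Enu_bound U) (Enu_ne U))). Qed.

Lemma nu_ge U p : sub (fun q => mem q p) U -> lam p <= nu U.
Proof.
  intro H; destruct (nu_spec U) as [Hm _].
  apply Hm; exists p; auto.
Qed.

Lemma nu_le U c : (forall p, sub (fun q => mem q p) U -> lam p <= c) -> nu U <= c.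
Proof.
  intro H; destruct (nu_spec U) as [_ Hm].
  apply Hm; intros x [p [Hp ->]]; auto.
Qed.

Lemma nu_approx U eps : 0 < eps -> exists p, sub (fun q => mem q p) U /\ nu U - eps < lam p.
Proof.
  intro He. apply NNPP; intro N.
  assert (nu U <= nu U - eps); [|lra].
  apply nu_le; intros p Hp. apply Rnot_lt_le; intro L; apply N; exists p; auto.
Qed.

Lemma nu_mono U V : sub U V -> nu U <= nu V.
Proof. intro H; apply nu_le; intros p Hp; apply nu_ge; intros q Hq; auto. Qed.

Lemma nu_ge0 U : 0 <= nu U.
Proof. apply Rle_trans with (lam bot); auto. apply nu_ge; intros q H; exfalso; apply (mem_bot q H). Qed.

Lemma nu_le1 U : nu U <= 1.
Proof. apply nu_le; intros; apply lam_le1. Qed.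

Definition Emu (A : X -> Prop) (x : R) := exists U, isopen U /\ sub A U /\ x = - nu U.
Lemma Emu_bound A : bound (Emu A).
Proof. exists 0; intros x [U [_ [_ ->]]]; pose proof (nu_ge0 U); lra. Qed.
Lemma Emu_ne A : exists x, Emu A x.
Proof. exists (- nu (fun _ => True)); exists (fun _ => True); repeat split; auto.
  intros q _; exists top; auto. Qed.

Definition mus (A : X -> Prop) : R := - proj1_sig (completeness (Emu A) (Emu_bound A) (Emu_ne A)).

Definition mus_s A := proj1_sig (completeness (Emu A) (Emu_bound A) (Emu_ne A)).
Lemma mus_spec A : is_lub (Emu A) (mus_s A).
Proof. exact (proj2_sig (completeness (Emu A) (Emu_bound A) (Emu_ne A))). Qed.
Lemma musE A : mus A = - mus_s A.
Proof. reflexivity. Qed.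

Lemma mus_le A U : isopen U -> sub A U -> mus A <= nu U.
Proof.
  intros HU HA; rewrite musE; destruct (mus_spec A) as [Hm _].
  assert (- nu U <= mus_s A) by (apply Hm; exists U; auto). lra.
Qed.

Lemma mus_ge A c : (forall U, isopen U -> sub A U -> c <= nu U) -> c <= mus A.
Proof.
  intro H; rewrite musE; destruct (mus_spec A) as [_ Hm].
  assert (mus_s A <= - c); [|lra].
  apply Hm; intros x [U [HU [HA ->]]]. specialize (H U HU HA). lra.
Qed.

Lemma mus_approx A eps : 0 < eps -> exists U, isopen U /\ sub A U /\ nu U < mus A + eps.
Proof.
  intro He. apply NNPP; intro N.
  assert (mus A + eps <= mus A); [|lra].
  apply mus_ge; intros U HU HA. apply Rnot_lt_le; intro L; apply N; exists U; auto.
Qed.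

Lemma mus_mono A B : sub A B -> mus A <= mus B.
Proof. intro H; apply mus_ge; intros U HU HB; apply mus_le; auto; intros q Hq; auto. Qed.

Lemma mus_ge0 A : 0 <= mus A.
Proof. apply mus_ge; intros; apply nu_ge0. Qed.

Lemma mus_open U : isopen U -> mus U = nu U.
Proof.
  intro HU; apply Rle_antisym. apply mus_le; auto; intros q; auto.
  apply mus_ge; intros V _ HV; apply nu_mono; auto.
Qed.

Lemma open_True : isopen (fun _ => True).
Proof. intros q _; exists top; auto. Qed.

Lemma mus_True : mus (fun _ => True) = 1.
Proof.
  rewrite mus_open by apply open_True. apply Rle_antisym. apply nu_le1.
  rewrite <- lam_top; apply nu_ge; intros q _; auto.
Qed.

Lemma mus_empty : mus (fun _ => False) = 0.
Proof.
  apply Rle_antisym; [|apply mus_ge0].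
  apply Rle_trans with (nu (fun q => mem q bot)).
  apply mus_le; [|intros q []]. intros q H; exists bot; auto.
  apply nu_le; intros p Hp. rewrite lam_empty; [lra|]. intros q H; apply (mem_bot q), Hp, H.
Qed.

Lemma mus_le1 A : mus A <= 1.
Proof. rewrite <- mus_True; apply mus_mono; intros q _; auto. Qed.


Definition basic p := fun q => mem q p.

Lemma closed_compact W : isopen W -> iscompact (fun q => ~ W q).
Proof.
  intros HW J U HU Hcov.
  set (Sg := fun p => exists r, p = neg r /\ (sub (basic r) W \/ exists j, sub (basic r) (U j))).
  assert (H : ~ forall l, (forall p, In p l -> Sg p) -> exists q, forall p, In p l -> mem q p).
  { intro H. destruct (compact Sg H) as [q Hq].
    destruct (classic (W q)) as [Wq|nWq].
    - destruct (HW q Wq) as [r [qr rW]].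
      assert (Sg (neg r)) by (exists r; split; auto).
      specialize (Hq _ H0). rewrite mem_neg in Hq. auto.
    - destruct (Hcov q nWq) as [j Uj]. destruct (HU j q Uj) as [r [qr rU]].
      assert (Sg (neg r)) by (exists r; split; [auto| right; exists j; exact rU]).
      specialize (Hq _ H0). rewrite mem_neg in Hq. auto. }
  apply not_all_ex_not in H. destruct H as [l Hl].
  apply imply_to_and in Hl. destruct Hl as [Hl Hn].
  assert (Ind : forall l, (forall p, In p l -> Sg p) -> exists js, forall q, ~ W q ->
            ~ (forall p, In p l -> mem q p) -> exists j, In j js /\ U j q).
  { clear l Hl Hn. induction l as [|a l IH]; intros Hl.
    - exists nil. intros q _ H; exfalso; apply H; intros p [].
    - destruct IH as [js Hjs]. intros p Hp; apply Hl; right; auto.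
      destruct (Hl a (or_introl eq_refl)) as [r [-> [rW | [j rU]]]].
      + exists js. intros q nW H.
        destruct (classic (mem q (neg r))) as [Hr|Hr].
        * apply Hjs; auto. intro H'; apply H; intros p [<-|Hp]; auto.
        * exfalso. rewrite mem_neg in Hr. apply nW, rW. apply NNPP; auto.
      + exists (j :: js). intros q nW H.
        destruct (classic (mem q (neg r))) as [Hr|Hr].
        * destruct (Hjs q nW) as [j' [Hj' Uj']].
          intro H'; apply H; intros p [<-|Hp]; auto.
          exists j'; split; [right|]; auto.
        * rewrite mem_neg in Hr. exists j; split; [left; auto|]. apply rU. apply NNPP; auto. }
  destruct (Ind l Hl) as [js Hjs]. exists js. intros q Kq.
  apply Hjs; auto. intro H; apply Hn; exists q; auto.
Qed.

Lemma basic_compact p : iscompact (basic p).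
Proof.
  intros J U HU Hcov.
  assert (HW : isopen (basic (neg p))) by (intros q H; exists (neg p); split; auto).
  destruct (closed_compact _ HW J U HU) as [l Hl].
  { intros q Hq. apply Hcov. unfold basic in Hq. rewrite mem_neg in Hq. apply NNPP; auto. }
  exists l. intros q Hq. apply Hl. unfold basic; rewrite mem_neg; auto.
Qed.

Lemma lam_le_nu2 p U V : isopen U -> isopen V ->
  sub (basic p) (fun q => U q \/ V q) -> lam p <= nu U + nu V.
Proof.
  intros HU HV H.
  set (Uj := fun j q => mem q j /\ (sub (basic j) U \/ sub (basic j) V)).
  destruct (basic_compact p Phi Uj) as [l Hl].
  - intros j q [Hq Hj]. exists j; split; auto. intros q' Hq'; split; auto.
  - intros q Hq. destruct (H q Hq) as [Uq|Vq].
    + destruct (HU q Uq) as [r [qr rU]]. exists r; split; auto.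
    + destruct (HV q Vq) as [r [qr rV]]. exists r; split; auto.
  - assert (Ind : forall l, exists p1 p2, sub (basic p1) U /\ sub (basic p2) V /\
        forall q, (exists j, In j l /\ Uj j q) -> mem q p1 \/ mem q p2).
    { clear l Hl. induction l as [|j l IH].
      - exists bot, bot. split; [|split]; try (intros q Hq; exfalso; apply (mem_bot q Hq)).
        intros q [j [[] _]].
      - destruct IH as [p1 [p2 [H1 [H2 H3]]]].
        destruct (classic (sub (basic j) U)) as [jU|njU].
        + exists (disj j p1), p2. split; [|split]; auto.
          * intros q Hq. unfold basic in Hq; rewrite mem_disj in Hq. destruct Hq; auto.
          * intros q [j' [[<-|Hj'] Hq]].
            left; rewrite mem_disj; left; apply Hq.
            destruct (H3 q (ex_intro _ j' (conj Hj' Hq))); [left; rewrite mem_disj|]; auto.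
        + destruct (classic (sub (basic j) V)) as [jV|njV].
          * exists p1, (disj j p2). split; [|split]; auto.
            -- intros q Hq. unfold basic in Hq; rewrite mem_disj in Hq. destruct Hq; auto.
            -- intros q [j' [[<-|Hj'] Hq]].
               right; rewrite mem_disj; left; apply Hq.
               destruct (H3 q (ex_intro _ j' (conj Hj' Hq))); [|right; rewrite mem_disj]; auto.
          * exists p1, p2. split; [|split]; auto.
            intros q [j' [[<-|Hj'] Hq]].
            exfalso; destruct Hq as [_ [?|?]]; auto.
            apply H3; exists j'; auto. }
    destruct (Ind l) as [p1 [p2 [H1 [H2 H3]]]].
    apply Rle_trans with (lam (disj p1 p2)).
    { apply lam_mono. intros q Hq. rewrite mem_disj. apply H3. apply Hl; auto. }
    apply Rle_trans with (lam p1 + lam p2). apply lam_disj_le.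
    apply Rplus_le_compat; apply nu_ge; auto.
Qed.

Lemma nu_union2 U V : isopen U -> isopen V -> nu (fun q => U q \/ V q) <= nu U + nu V.
Proof. intros HU HV; apply nu_le; intros p Hp; apply lam_le_nu2; auto. Qed.

Definition UN (U : nat -> X -> Prop) N := fun q => exists n, (n < N)%nat /\ U n q.
Definition UC (U : nat -> X -> Prop) := fun q => exists n, U n q.

Lemma open_UN U N : (forall n, isopen (U n)) -> isopen (UN U N).
Proof.
  intros HU q [n [Hn Hq]]. destruct (HU n q Hq) as [p [qp pU]].
  exists p; split; auto. intros q' H; exists n; auto.
Qed.

Lemma open_UC U : (forall n, isopen (U n)) -> isopen (UC U).
Proof.
  intros HU q [n Hq]. destruct (HU n q Hq) as [p [qp pU]].
  exists p; split; auto. intros q' H; exists n; auto.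
Qed.

Lemma open_I U V : isopen U -> isopen V -> isopen (fun q => U q /\ V q).
Proof.
  intros HU HV q [Uq Vq]. destruct (HU q Uq) as [p1 [q1 H1]]. destruct (HV q Vq) as [p2 [q2 H2]].
  exists (cnj p1 p2). rewrite mem_conj. split; auto. intros q' H'; rewrite mem_conj in H'; firstorder.
Qed.

Lemma open_basic p : isopen (basic p).
Proof. intros q H; exists p; auto. Qed.

Lemma nu_empty U : sub U (fun _ => False) -> nu U = 0.
Proof.
  intro H; apply Rle_antisym; [|apply nu_ge0].
  apply nu_le; intros p Hp. rewrite lam_empty; [lra|]. intros q Hq; apply (H q), Hp, Hq.
Qed.

Lemma nu_UN U N : (forall n, isopen (U n)) -> nu (UN U N) <= psum (fun n => nu (U n)) N.
Proof.
  intro HU; induction N as [|N IH]; simpl.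
  - rewrite nu_empty; [lra|]. intros q [n [Hn _]]; inversion Hn.
  - apply Rle_trans with (nu (fun q => UN U N q \/ U N q)).
    + apply nu_mono. intros q [n [Hn Hq]].
      destruct (Nat.eq_dec n N) as [->|ne]; [right; auto|left; exists n; split; [lia|auto]].
    + apply Rle_trans with (nu (UN U N) + nu (U N)). apply nu_union2; auto. apply open_UN; auto.
      lra.
Qed.

Lemma basic_countable p (U : nat -> X -> Prop) : (forall n, isopen (U n)) ->
  sub (basic p) (UC U) -> exists N, sub (basic p) (UN U N).
Proof.
  intros HU H. destruct (basic_compact p nat U HU H) as [l Hl].
  exists (fold_right (fun n m => Nat.max (S n) m) 0%nat l).
  intros q Hq. destruct (Hl q Hq) as [j [Hj Uj]]. exists j; split; auto.
  clear -Hj. revert j Hj. induction l as [|a l IH]; cbn [fold_right In] in *; intros j Hj. destruct Hj.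
  destruct Hj as [<-|Hj]. apply Nat.lt_le_trans with (S a); [auto|apply Nat.le_max_l].
  specialize (IH j Hj). eapply Nat.lt_le_trans; [apply IH|apply Nat.le_max_r].
Qed.

Lemma nu_countable U eps : (forall n, isopen (U n)) -> 0 < eps ->
  exists N, nu (UC U) <= psum (fun n => nu (U n)) N + eps.
Proof.
  intros HU He. destruct (nu_approx (UC U) eps He) as [p [Hp Hlt]].
  destruct (basic_countable p U HU Hp) as [N HN]. exists N.
  assert (lam p <= nu (UN U N)) by (apply nu_ge; auto).
  pose proof (nu_UN U N HU). lra.
Qed.


Lemma mus_sub (F : nat -> X -> Prop) eps : 0 < eps ->
  exists N, mus (fun x => exists n, F n x) <= psum (fun i => mus (F i)) N + eps.
Proof.
  intro He.
  set (d := fun n : nat => eps / 2 * / 2 ^ S n).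
  assert (Hd : forall n, 0 < d n).
  { intro n; unfold d. apply Rmult_lt_0_compat; [lra|]. apply Rinv_0_lt_compat, pow_lt; lra. }
  assert (HU : forall n, exists U, isopen U /\ sub (F n) U /\ nu U < mus (F n) + d n)
    by (intro n; apply mus_approx; auto).
  set (U := fun n => proj1_sig (constructive_indefinite_description _ (HU n))).
  assert (HU' : forall n, isopen (U n) /\ sub (F n) (U n) /\ nu (U n) < mus (F n) + d n)
    by (intro n; exact (proj2_sig (constructive_indefinite_description _ (HU n)))).
  assert (Ho : forall n, isopen (U n)) by (intro n; apply HU').
  destruct (nu_countable U (eps/2) Ho) as [N HN]; [lra|].
  exists N.
  assert (mus (fun x => exists n, F n x) <= nu (UC U)).
  { apply mus_le. apply open_UC; auto. intros q [n Hq]. exists n. apply HU'; auto. }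
  assert (psum (fun n => nu (U n)) N <= psum (fun i => mus (F i) + d i) N).
  { apply psum_le; intro n; left; apply HU'. }
  rewrite psum_plus in H0.
  pose proof (psum_geom (eps/2) N).
  assert (0 <= eps / 2 * / 2 ^ N).
  { left; apply Rmult_lt_0_compat; [lra|]. apply Rinv_0_lt_compat, pow_lt; lra. }
  unfold d in H0. lra.
Qed.

Lemma open_split U A : isopen U ->
  mus (fun x => A x /\ U x) + mus (fun x => A x /\ ~ U x) <= mus A.
Proof.
  intro HU. apply le_eps; intros e He.
  destruct (mus_approx A (e/2)) as [V [HV [AV HVl]]]; [lra|].
  destruct (nu_approx (fun q => V q /\ U q) (e/2)) as [p [Hp Hpl]]; [lra|].
  assert (H1 : mus (fun x => A x /\ U x) <= nu (fun q => V q /\ U q)).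
  { apply mus_le. apply open_I; auto. intros q [Aq Uq]; auto. }
  set (V' := fun q => V q /\ ~ mem q p).
  assert (HV' : isopen V').
  { apply open_I; auto. intros q Hq. exists (neg p). rewrite mem_neg. split; auto.
    intros q' Hq'; rewrite mem_neg in Hq'; auto. }
  assert (H2 : mus (fun x => A x /\ ~ U x) <= nu V').
  { apply mus_le; auto. intros q [Aq nUq]. split; auto. intro Hq; apply nUq, Hp, Hq. }
  assert (H3 : nu V' <= nu V - lam p).
  { apply nu_le; intros r Hr.
    assert (lam (disj p r) <= nu V).
    { apply nu_ge. intros q Hq. unfold basic in Hq; rewrite mem_disj in Hq.
      destruct Hq as [Hq|Hq]; [apply Hp, Hq| apply Hr, Hq]. }
    rewrite lam_disj_eq in H. lra.
    intros q Hq1 Hq2. apply (Hr q Hq2); auto. }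
  lra.
Qed.

Lemma mus_ext A B : (forall q, A q <-> B q) -> mus A = mus B.
Proof. intro H; apply Rle_antisym; apply mus_mono; intros q; apply H. Qed.

Lemma mus_mono' : forall A B : X -> Prop, (forall x, A x -> B x) -> mus A <= mus B.
Proof. intros; apply mus_mono; auto. Qed.

Definition cara := CaraM.cara X mus.

Lemma cara_open U : isopen U -> cara U.
Proof.
  intro HU. apply (CaraM.cara_suff X mus mus_empty mus_ge0 mus_mono' mus_sub).
  intro A; apply open_split; auto.
Qed.

Lemma cara_C A : cara A -> cara (fun q => ~ A q).
Proof. apply (CaraM.cara_C X mus mus_empty mus_ge0 mus_mono' mus_sub). Qed.

Lemma cara_U (A : nat -> X -> Prop) : (forall n, cara (A n)) -> cara (fun q => exists n, A n q).
Proof. apply (CaraM.cara_U X mus mus_empty mus_ge0 mus_mono' mus_sub). Qed.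

Lemma borel_cara B : isborel B -> cara B.
Proof. intro H; apply H; [apply cara_open|apply cara_C|apply cara_U]. Qed.

Lemma mus_split A Y : cara A -> mus Y = mus (fun x => Y x /\ A x) + mus (fun x => Y x /\ ~ A x).
Proof. intro H; apply (CaraM.cara_eq X mus A Y H). Qed.

Lemma borel_C B : isborel B -> isborel (fun q => ~ B q).
Proof. intros H C HO HC HU; apply HC; apply H; auto. Qed.

Lemma open_borel U : isopen U -> isborel U.
Proof. intros H C HO HC HU; apply HO; auto. Qed.

Lemma mus_csum (B : nat -> X -> Prop) : (forall n, isborel (B n)) ->
  (forall n m q, n <> m -> B n q -> B m q -> False) ->
  infinite_sum (fun n => mus (B n)) (mus (fun q => exists n, B n q)).
Proof.
  intros HB HD.
  assert (E : forall N, mus (UN B N) = psum (fun n => mus (B n)) N).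
  { induction N as [|N IH]; simpl.
    - rewrite <- mus_empty. apply mus_ext. intro q; split; [intros [n [Hn _]]; inversion Hn|intros []].
    - rewrite (mus_split (B N) (UN B (S N))) by (apply borel_cara; auto).
      rewrite <- IH. rewrite Rplus_comm. f_equal; apply mus_ext; intro q; split.
      + intros [[n [Hn Hq]] Hq']. exists n; split; auto.
        destruct (Nat.eq_dec n N) as [->|ne]; [contradiction|lia].
      + intros [n [Hn Hq]]. split. exists n; split; auto.
        intro HN. apply (HD n N q); auto. lia.
      + intros [_ H]; auto.
      + intro H; split; auto. exists N; split; auto. }
  intros eps He.
  destruct (mus_sub B (eps/2)) as [N0 HN0]; [lra|].
  exists N0. intros n Hn. unfold R_dist. rewrite psum_sum, <- E.
  assert (mus (UN B (S n)) <= mus (fun q => exists n, B n q)).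
  { apply mus_mono; intros q [k [_ Hk]]; exists k; auto. }
  assert (psum (fun n => mus (B n)) N0 <= psum (fun n => mus (B n)) (S n)).
  { apply psum_mono; [intro; apply mus_ge0|lia]. }
  rewrite <- !E in H0. rewrite <- E in HN0.
  unfold Rabs; destruct (Rcase_abs _); lra.
Qed.

Lemma mus_compl B : cara B -> mus (fun q => ~ B q) = 1 - mus B.
Proof.
  intro H. rewrite <- mus_True, (mus_split B (fun _ => True)) by auto.
  rewrite (mus_ext (fun x => True /\ B x) B), (mus_ext (fun x => True /\ ~ B x) (fun q => ~ B q)); [ring| |];
  intro; tauto.
Qed.

Theorem gen_measure :
  (forall B, isborel B -> 0 <= mus B) /\
  mus (fun _ => True) = 1 /\
  (forall B : nat -> X -> Prop, (forall n, isborel (B n)) ->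
     (forall n m q, n <> m -> B n q -> B m q -> False) ->
     infinite_sum (fun n => mus (B n)) (mus (fun q => exists n, B n q))) /\
  (forall B, isborel B -> forall eps, 0 < eps ->
     (exists K, iscompact K /\ (forall q, K q -> B q) /\ mus B - eps < mus K) /\
     (exists U, isopen U /\ (forall q, B q -> U q) /\ mus U < mus B + eps)).
Proof.
  split; [intros; apply mus_ge0|]. split; [apply mus_True|]. split; [apply mus_csum|].
  intros B HB eps He. split.
  - destruct (mus_approx (fun q => ~ B q) eps He) as [U [HU [BU HUl]]].
    exists (fun q => ~ U q). split; [apply closed_compact; auto|]. split.
    + intros q Hq. apply NNPP; intro nB; apply Hq, BU, nB.
    + rewrite mus_compl by (apply cara_open; auto).
      rewrite mus_compl in HUl by (apply borel_cara; auto).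
      rewrite (mus_open U HU). lra.
  - destruct (mus_approx B eps He) as [U [HU [BU HUl]]].
    exists U; split; auto; split; auto. rewrite (mus_open U HU); auto.
Qed.

Section Inv.
Variables f f' : Phi -> Phi.
Hypothesis lam_f : forall p, lam (f p) = lam p.
Hypothesis lam_f' : forall p, lam (f' p) = lam p.
Hypothesis inv1 : forall q p, mem q (f (f' p)) <-> mem q p.
Hypothesis inv2 : forall q p, mem q (f' (f p)) <-> mem q p.
Hypothesis act : forall q', exists q, forall p, mem q' (f p) <-> mem q p.
Hypothesis act' : forall q', exists q, forall p, mem q' (f' p) <-> mem q p.
Hypothesis mem_ext : forall q q', (forall p, mem q p <-> mem q' p) -> q = q'.

Definition img (g : Phi -> Phi) (A : X -> Prop) :=
  fun q => exists q', A q' /\ forall p, mem q' (g p) <-> mem q p.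

Lemma mus_img_le (g : Phi -> Phi) A :
  (forall p, lam (g p) = lam p) ->
  (forall q', exists q, forall p, mem q' (g p) <-> mem q p) ->
  (forall q, exists q', forall p, mem q' (g p) <-> mem q p) ->
  (forall p, exists r, forall q', mem q' (g r) <-> mem q' p) ->
  mus (img g A) <= mus A.
Proof.
  intros H1 H2 H3 H4. apply mus_ge; intros U HU AU.
  assert (Ho : isopen (img g U)).
  { intros q [q' [Uq' Rq]]. destruct (HU q' Uq') as [p [q'p pU]].
    destruct (H4 p) as [r Hr]. exists r. split. apply Rq, Hr, q'p.
    intros q2 Hq2. destruct (H3 q2) as [q2' R2]. exists q2'. split; auto.
    apply pU, Hr, R2, Hq2. }
  apply Rle_trans with (nu (img g U)).
  { apply mus_le; auto. intros q [q' [Aq' Rq]]; exists q'; split; auto. }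
  apply nu_le; intros c Hc. rewrite <- H1. apply nu_ge. intros q' Hq'.
  destruct (H2 q') as [q Rq].
  destruct (Hc q (proj1 (Rq c) Hq')) as [q'' [Uq'' R'']].
  replace q' with q''; auto. apply mem_ext; intro p.
  destruct (H4 p) as [r Hr]. rewrite <- (Hr q''), <- (Hr q'), R'', Rq. tauto.
Qed.

Lemma mus_img A : mus (img f A) = mus A.
Proof.
  assert (H3 : forall q, exists q', forall p, mem q' (f p) <-> mem q p).
  { intro q. destruct (act' q) as [q' Hq']. exists q'. intro p. rewrite <- Hq'. apply inv2. }
  assert (H3' : forall q, exists q', forall p, mem q' (f' p) <-> mem q p).
  { intro q. destruct (act q) as [q' Hq']. exists q'. intro p. rewrite <- Hq'. apply inv1. }
  apply Rle_antisym. apply mus_img_le; auto. intro p; exists (f' p); auto.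
  rewrite (mus_ext A (img f' (img f A))).
  apply mus_img_le; auto. intro p; exists (f p); auto.
  intro q; split.
  - intro Aq. destruct (act q) as [q1 R1]. exists q1. split. exists q; split; auto.
    intro p. rewrite <- R1. apply inv1.
  - intros [q1 [[q0 [Aq0 R0]] R1]]. replace q with q0; auto. apply mem_ext; intro p.
    rewrite <- R1, <- R0. symmetry; apply inv1.
Qed.

End Inv.

End Gen.

Close Scope R_scope.

From mathcomp Require boolp classical_sets.
Module LindM.
Import mathcomp.classical.classical_sets.

Section Lind.
Variables (Fo Asg : Type) (holds : Asg -> Fo -> Prop) (neg : Fo -> Fo).
Hypothesis hneg : forall a p, holds a (neg p) <-> ~ holds a p.

Definition fsat (A : Fo -> Prop) := forall l, (forall p, List.In p l -> A p) -> exists a, forall p, List.In p l -> holds a p.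

Lemma reduce_list (A : Fo -> Prop) (c : Fo) l : (forall p, List.In p l -> A p \/ p = c) ->
  exists l', (forall p, List.In p l' -> A p) /\
    forall a, (forall p, List.In p l' -> holds a p) -> holds a c -> forall p, List.In p l -> holds a p.
Proof.
  induction l as [|x l IH]; intro H.
  - exists nil; split; [intros p []|intros a _ _ p []].
  - destruct IH as [l' [H1 H2]]. intros p Hp; apply H; right; auto.
    destruct (H x (or_introl eq_refl)) as [Ax| ->].
    + exists (x :: l'); split.
      * intros p [<-|Hp]; auto.
      * intros a Ha Hc p [<-|Hp]; [apply Ha; left; auto|]. apply H2; auto. intros; apply Ha; right; auto.
    + exists l'; split; auto. intros a Ha Hc p [<-|Hp]; auto.
Qed.

Lemma lind (Sg : Fo -> Prop) : fsat Sg ->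
  exists q : Fo -> Prop, (forall p, Sg p -> q p) /\ fsat q /\ (forall p, q p \/ q (neg p)).
Proof.
  intro HS.
  set (P := fun A : Fo -> Prop => fsat (fun p => A p \/ Sg p)).
  destruct (@Zorn_bigcup Fo P) as [A [PA Amax]].
  - intros F FP Ftot l Hl.
    assert (Hc : forall l, (forall p, List.In p l -> (exists2 X, F X & X p) \/ Sg p) ->
              (forall p, List.In p l -> Sg p) \/ exists X, F X /\ forall p, List.In p l -> X p \/ Sg p).
    { clear l Hl. induction l as [|x l IH]; intro H.
      - left; intros p [].
      - destruct IH as [IH|[X [FX HX]]]. intros p Hp; apply H; right; auto.
        + destruct (H x (or_introl eq_refl)) as [[Y FY Yx]|Sx].
          * right; exists Y; split; auto. intros p [<-|Hp]; auto.
          * left; intros p [<-|Hp]; auto.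
        + destruct (H x (or_introl eq_refl)) as [[Y FY Yx]|Sx].
          * destruct (Ftot X Y FX FY) as [XY|YX].
            -- right; exists Y; split; auto. intros p [<-|Hp]; auto. destruct (HX p Hp); auto.
            -- right; exists X; split; auto. intros p [<-|Hp]; auto.
          * right; exists X; split; auto. intros p [<-|Hp]; auto. }
    destruct (Hc l Hl) as [H|[X [FX HX]]].
    + apply HS; auto.
    + apply (FP X FX); auto.
  - exists (fun p => A p \/ Sg p). split; [auto|]. split; [exact PA|].
    assert (SA : forall p, Sg p -> A p).
    { apply NNPP; intro N. apply (Amax (fun p => A p \/ Sg p)); unfold proper, subset.
      split. intros x Hx; left; auto. intro H. apply N; intros p Sp. apply H; right; auto.
      intros l Hl. apply PA. intros p Hp; destruct (Hl p Hp); tauto. }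
    intro p. apply NNPP; intro N.
    assert (N1 : ~ P (fun x => A x \/ x = p)).
    { apply Amax; unfold proper, subset; split. intros x Hx; left; auto. intro H. apply N. left; left. apply H; right; auto. }
    assert (N2 : ~ P (fun x => A x \/ x = neg p)).
    { apply Amax; unfold proper, subset; split. intros x Hx; left; auto. intro H. apply N. right; left. apply H; right; auto. }
    apply N1. intros l1 Hl1.
    apply NNPP; intro U1. apply N2. intros l2 Hl2.
    apply NNPP; intro U2.
    destruct (reduce_list A p l1) as [l1' [A1 R1]].
    { intros x Hx. destruct (Hl1 x Hx) as [[?|?]|?]; auto. }
    destruct (reduce_list A (neg p) l2) as [l2' [A2 R2]].
    { intros x Hx. destruct (Hl2 x Hx) as [[?|?]|?]; auto. }
    destruct (PA (l1' ++ l2')) as [a Ha].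
    { intros x Hx. apply in_app_or in Hx. destruct Hx; auto. }
    destruct (classic (holds a p)) as [Hp|Hp].
    + apply U1. exists a. apply R1; auto. intros; apply Ha; apply in_or_app; auto.
    + apply U2. exists a. apply R2; auto. intros; apply Ha; apply in_or_app; auto. apply hneg; auto.
Qed.
End Lind.
End LindM.

Import ListNotations.
Import ListNotations.

Fixpoint fin_all (n : nat) : list (Fin.t n) :=
  match n with O => [] | S n => Fin.F1 :: map Fin.FS (fin_all n) end.

Lemma fin_all_In n (i : Fin.t n) : In i (fin_all n).
Proof.
  induction i; simpl; auto. right; apply in_map; auto.
Qed.

Section Syn.
Variable S : signature.
Arguments TVar {S V}. Arguments TApp {S V}.
Arguments FEq {S V}. Arguments FRel {S V}. Arguments FNot {S V}.
Arguments FAnd {S V}. Arguments FEx {S V}.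

Lemma tmap_comp V W U (h1 : V -> W) (h2 : W -> U) (t : term S V) :
  tmap S h2 (tmap S h1 t) = tmap S (fun v => h2 (h1 v)) t.
Proof.
  induction t as [v|f args IH]; simpl; auto.
  f_equal; apply functional_extensionality; intro i; apply IH.
Qed.

Lemma tmap_ext V W (h h' : V -> W) (t : term S V) : (forall v, h v = h' v) -> tmap S h t = tmap S h' t.
Proof. intro H; replace h' with h; auto; apply functional_extensionality; auto. Qed.

Lemma fmap_ext V W (h h' : V -> W) (p : formula S V) : (forall v, h v = h' v) -> fmap S h p = fmap S h' p.
Proof. intro H; replace h' with h; auto; apply functional_extensionality; auto. Qed.

Lemma fmap_comp V W U (h1 : V -> W) (h2 : W -> U) (p : formula S V) :
  fmap S h2 (fmap S h1 p) = fmap S (fun v => h2 (h1 v)) p.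
Proof.
  revert W U h1 h2; induction p as [V t u|V r args|V p IH|V p IHp q IHq|V p IH]; intros W U h1 h2; simpl.
  - rewrite !tmap_comp; auto.
  - f_equal; apply functional_extensionality; intro i; apply tmap_comp.
  - rewrite IH; auto.
  - rewrite IHp, IHq; auto.
  - rewrite IH. f_equal. apply fmap_ext. intros [v|]; reflexivity.
Qed.

Lemma teval_tmap (M : structure S) V W (h : V -> W) (e : W -> M) (t : term S V) :
  teval S M e (tmap S h t) = teval S M (fun v => e (h v)) t.
Proof.
  induction t as [v|f args IH]; simpl; auto.
  f_equal; apply functional_extensionality; intro i; apply IH.
Qed.

Lemma sat_fmap (M : structure S) V W (h : V -> W) (p : formula S V) : forall (e : W -> M),
  sat S M e (fmap S h p) <-> sat S M (fun v => e (h v)) p.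
Proof.
  revert W h; induction p as [V t u|V r args|V p IH|V p IHp q IHq|V p IH]; intros W h e; simpl.
  - rewrite !teval_tmap; tauto.
  - replace (fun i => teval S M e (tmap S h (args i))) with (fun i => teval S M (fun v => e (h v)) (args i)).
    tauto. apply functional_extensionality; intro i; rewrite teval_tmap; auto.
  - rewrite IH; tauto.
  - rewrite IHp, IHq; tauto.
  - split; intros [m Hm]; exists m; rewrite IH in *.
    + replace (ext (fun v => e (h v)) m) with (fun v => ext e m (omap h v)); auto.
      apply functional_extensionality; intros [v|]; reflexivity.
    + replace (fun v => ext e m (omap h v)) with (ext (fun v => e (h v)) m); auto.
      apply functional_extensionality; intros [v|]; reflexivity.
Qed.


Fixpoint tvars {V : Type} (t : term S V) : list V :=
  match t with
  | TVar v => [v]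
  | TApp f args => flat_map (fun i => tvars (args i)) (fin_all _)
  end.

Definition unopt {V : Type} (o : option V) : list V := match o with Some v => [v] | None => [] end.

Fixpoint vars {V : Type} (p : formula S V) : list V :=
  match p with
  | FEq t u => tvars t ++ tvars u
  | FRel r args => flat_map (fun i => tvars (args i)) (fin_all _)
  | FNot p => vars p
  | FAnd p q => vars p ++ vars q
  | FEx p => flat_map unopt (vars p)
  end.

Lemma teval_supp (M : structure S) V (t : term S V) (e e' : V -> M) :
  (forall v, In v (tvars t) -> e v = e' v) -> teval S M e t = teval S M e' t.
Proof.
  induction t as [v|f args IH]; simpl; intro H.
  - apply H; auto.
  - f_equal; apply functional_extensionality; intro i; apply IH.
    intros v Hv; apply H. apply in_flat_map. exists i; split; auto. apply fin_all_In.
Qed.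

Lemma sat_supp (M : structure S) V (p : formula S V) : forall (e e' : V -> M),
  (forall v, In v (vars p) -> e v = e' v) -> (sat S M e p <-> sat S M e' p).
Proof.
  induction p as [V t u|V r args|V p IH|V p IHp q IHq|V p IH]; intros e e' H; simpl in *.
  - rewrite (teval_supp M V t e e'), (teval_supp M V u e e'); try tauto;
    intros v Hv; apply H; apply in_or_app; auto.
  - replace (fun i => teval S M e' (args i)) with (fun i => teval S M e (args i)). tauto.
    apply functional_extensionality; intro i. apply teval_supp. intros v Hv; apply H.
    apply in_flat_map. exists i; split; auto. apply fin_all_In.
  - rewrite (IH e e'); tauto.
  - rewrite (IHp e e'), (IHq e e'); try tauto; intros v Hv; apply H; apply in_or_app; auto.
  - assert (E : forall m, sat S M (ext e m) p <-> sat S M (ext e' m) p).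
    { intro m; apply IH. intros [v|] Hv; simpl; auto; apply H; apply in_flat_map; exists (Some v); simpl; auto. }
    split; intros [m Hm]; exists m; apply E; auto.
Qed.

Lemma teval_aut (M : structure S) s V (e : V -> M) (t : term S V) : automorphism S M s ->
  teval S M (fun v => s (e v)) t = s (teval S M e t).
Proof.
  intros [_ [_ [Hf _]]]. induction t as [v|f args IH]; simpl; auto.
  rewrite Hf. f_equal; apply functional_extensionality; intro i; apply IH.
Qed.

Lemma sat_aut (M : structure S) s (Hs : automorphism S M s) V (p : formula S V) : forall (e : V -> M),
  sat S M (fun v => s (e v)) p <-> sat S M e p.
Proof.
  induction p as [V t u|V r args|V p IH|V p IHp q IHq|V p IH]; intros e; simpl.
  - rewrite !teval_aut by auto. destruct Hs as [Hi _]. split; [apply Hi|intros ->; auto].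
  - pose proof Hs as [_ [_ [_ Hr]]]. rewrite (Hr r (fun i => teval S M e (args i))).
    replace (fun i => teval S M (fun v => s (e v)) (args i)) with (fun i => s (teval S M e (args i))). tauto.
    apply functional_extensionality; intro i; rewrite teval_aut; auto.
  - rewrite IH; tauto.
  - rewrite IHp, IHq; tauto.
  - split; intros [m Hm].
    + pose proof Hs as [_ [Hsur _]]. destruct (Hsur m) as [m0 <-]. exists m0. rewrite <- IH.
      replace (fun v => s (ext e m0 v)) with (ext (fun v => s (e v)) (s m0)); auto.
      apply functional_extensionality; intros [v|]; reflexivity.
    + exists (s m). rewrite <- IH in Hm.
      replace (ext (fun v => s (e v)) (s m)) with (fun v => s (ext e m v)); auto.
      apply functional_extensionality; intros [v|]; reflexivity.
Qed.

End Syn.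

Import ListNotations.

Fixpoint lnth {X : Type} (l : list X) : Fin.t (length l) -> X :=
  match l return Fin.t (length l) -> X with
  | nil => fun i => Fin.case0 (fun _ => X) i
  | x :: l => fun i => Fin.caseS' i (fun _ => X) x (lnth l)
  end.

Lemma lnth_In {X : Type} (l : list X) i : In (lnth l i) l.
Proof.
  induction l as [|x l IH]; simpl in *. apply (Fin.case0 (fun i => False) i).
  apply (Fin.caseS' i (fun i => x = Fin.caseS' i (fun _ => X) x (lnth l) \/ In (Fin.caseS' i (fun _ => X) x (lnth l)) l)); simpl; auto.
Qed.

Lemma lnth_surj {X : Type} (l : list X) x : In x l -> exists i, lnth l i = x.
Proof.
  induction l as [|y l IH]; simpl; intros H. destruct H.
  destruct H as [<-|H]. exists Fin.F1; reflexivity.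
  destruct (IH H) as [i Hi]. exists (Fin.FS i); simpl; auto.
Qed.

Section Typ.
Variable S : signature.
Arguments TVar {S V}. Arguments TApp {S V}.
Arguments FEq {S V}. Arguments FRel {S V}. Arguments FNot {S V}.
Arguments FAnd {S V}. Arguments FEx {S V}.

Lemma tmap_id V (t : term S V) : tmap S (fun v => v) t = t.
Proof. induction t as [v|f args IH]; simpl; auto; f_equal; apply functional_extensionality; auto. Qed.

Lemma fmap_id V (p : formula S V) : fmap S (fun v => v) p = p.
Proof.
  induction p as [V t u|V r args|V p IH|V p IHp q IHq|V p IH]; simpl.
  - rewrite !tmap_id; auto.
  - f_equal; apply functional_extensionality; intro i; apply tmap_id.
  - rewrite IH; auto.
  - rewrite IHp, IHq; auto.
  - f_equal. rewrite <- IH at 2. apply fmap_ext. intros [v|]; auto.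
Qed.

Definition top0 {V : Type} : formula S V := FEx (FEq (TVar None) (TVar None)).

Lemma sat_top0 (N : structure S) V (e : V -> N) : sat S N e top0.
Proof. destruct (carrier_inh S N) as [m]. exists m; reflexivity. Qed.

Definition conjl {V : Type} (l : list (formula S V)) : formula S V := fold_right FAnd top0 l.

Lemma sat_conjl (N : structure S) V (e : V -> N) l : sat S N e (conjl l) <-> forall p, In p l -> sat S N e p.
Proof.
  induction l as [|p l IH]; simpl. split; [intros _ p []|intros; exact (sat_top0 N V e)].
  rewrite IH. split. intros [H1 H2] r [<-|Hr]; auto. intros H; split; auto.
Qed.

Section CT.
Variables (I : Type) (N : structure S) (q : formula S (I + N) -> Prop).
Hypothesis Hq : complete_type S I N q.

Lemma ct_sat l : (forall p, In p l -> q p) -> exists a, forall p, In p l -> sat S N (penv S N a) p.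
Proof. apply Hq. Qed.

Lemma ct_neg p : q (FNot p) <-> ~ q p.
Proof.
  split.
  - intros H1 H2. destruct (ct_sat [p; FNot p]) as [a Ha]; [intros r [<-|[<-|[]]]; auto|].
    apply (Ha (FNot p)); simpl; auto. apply Ha; simpl; auto.
  - intro H. destruct (proj2 Hq p); tauto.
Qed.

Lemma ct_imp p r : (forall a, sat S N (penv S N a) p -> sat S N (penv S N a) r) -> q p -> q r.
Proof.
  intros H Hp. apply NNPP; intro Hr. apply ct_neg in Hr.
  destruct (ct_sat [p; FNot r]) as [a Ha]; [intros x [<-|[<-|[]]]; auto|].
  apply (Ha (FNot r)); simpl; auto. apply H, Ha; simpl; auto.
Qed.

Lemma ct_and p r : q (FAnd p r) <-> q p /\ q r.
Proof.
  split.
  - intro H; split; apply (ct_imp (FAnd p r)); auto; intros a [? ?]; auto.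
  - intros [H1 H2]. apply NNPP; intro H. apply ct_neg in H.
    destruct (ct_sat [p; r; FNot (FAnd p r)]) as [a Ha]; [intros x [<-|[<-|[<-|[]]]]; auto|].
    apply (Ha (FNot (FAnd p r))); simpl; auto. split; apply Ha; simpl; auto.
Qed.

Lemma ct_true p : (forall a, sat S N (penv S N a) p) -> q p.
Proof.
  intro H. apply (ct_imp top0). intros; apply H. destruct (proj2 Hq top0) as [?|H0]; auto.
  exfalso. destruct (ct_sat [FNot top0]) as [a Ha]; [intros x [<-|[]]; auto|].
  apply (Ha (FNot top0)); simpl; auto. exact (sat_top0 N _ (penv S N a)).
Qed.

End CT.

Definition fsatN I (N : structure S) (Sg : formula S (I + N) -> Prop) :=
  forall l, (forall p, In p l -> Sg p) -> exists a : I -> N, forall p, In p l -> sat S N (penv S N a) p.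

Lemma lindenbaum I (N : structure S) Sg : fsatN I N Sg ->
  exists q, complete_type S I N q /\ forall p, Sg p -> q p.
Proof.
  intro H. destruct (LindM.lind (formula S (I + N)) (I -> N) (fun a p => sat S N (penv S N a) p) FNot
    (fun a p => iff_refl _) Sg H) as [q [H1 [H2 H3]]].
  exists q; split; auto. split; auto.
Qed.

Lemma spi_of I pi (N : structure S) (Sg : formula S (I + N) -> Prop) :
  fsatN I N (fun p => Sg p \/ exists r, pi r /\ p = fmap S inl r) ->
  exists q : Spi S I pi N, forall p, Sg p -> proj1_sig q p.
Proof.
  intro H. destruct (lindenbaum I N _ H) as [q [Hq Hs]].
  assert (Hp : complete_type S I N q /\ forall r, pi r -> q (fmap S inl r)).
  { split; auto. intros r Hr; apply Hs; right; exists r; auto. }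
  exists (exist _ q Hp). simpl; intros; apply Hs; auto.
Qed.

Lemma spi_ext I pi (N : structure S) (q q' : Spi S I pi N) :
  (forall p, proj1_sig q p <-> proj1_sig q' p) -> q = q'.
Proof.
  intro H. destruct q as [q Hq], q' as [q' Hq']; simpl in H.
  assert (q = q') by (apply functional_extensionality; intro p; apply propositional_extensionality; auto).
  subst q'. f_equal. apply proof_irrelevance.
Qed.

Definition pmap' {I : Type} {N : Type} (s : N -> N) (v : I + N) : I + N :=
  match v with inl i => inl i | inr m => inr (s m) end.

Lemma aut_inv (N : structure S) s : automorphism S N s ->
  exists t, automorphism S N t /\ (forall x, t (s x) = x) /\ (forall x, s (t x) = x).
Proof.
  intros Hs. pose proof Hs as [Hi [Hsur [Hf Hr]]].
  set (t := fun y => proj1_sig (constructive_indefinite_description _ (Hsur y))).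
  assert (st : forall y, s (t y) = y) by (intro y; exact (proj2_sig (constructive_indefinite_description _ (Hsur y)))).
  assert (ts : forall x, t (s x) = x) by (intro x; apply Hi; rewrite st; auto).
  exists t; split; [|split; auto].
  split; [|split; [|split]].
  - intros x y E. rewrite <- (st x), <- (st y), E; auto.
  - intro y; exists (s y); auto.
  - intros f args. apply Hi. rewrite st, Hf. f_equal; apply functional_extensionality; intro i; rewrite st; auto.
  - intros r args. rewrite (Hr r (fun i => t (args i))).
    replace (fun i => s (t (args i))) with args; [tauto|]. apply functional_extensionality; intro i; rewrite st; auto.
Qed.

Lemma act_spi I pi (N : structure S) s : automorphism S N s -> forall (q : Spi S I pi N),
  exists q' : Spi S I pi N, forall p, proj1_sig q (fmap S (pmap s) p) <-> proj1_sig q' p.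
Proof.
  intros Hs [q [Hq Hpi]]. destruct (aut_inv N s Hs) as [t [Ht [ts st]]].
  assert (Hc : complete_type S I N (fun p => q (fmap S (pmap s) p)) /\
               forall r, pi r -> q (fmap S (pmap s) (fmap S inl r))).
  { split; [split|].
    - intros l Hl. destruct (ct_sat I N q Hq (map (fmap S (pmap s)) l)) as [a Ha].
      { intros p Hp. apply in_map_iff in Hp. destruct Hp as [x [<- Hx]]. auto. }
      exists (fun i => t (a i)). intros p Hp. specialize (Ha _ (in_map _ _ _ Hp)).
      rewrite sat_fmap in Ha. rewrite <- (sat_aut S N t Ht) in Ha.
      replace (penv S N (fun i => t (a i))) with (fun v => t (penv S N a (pmap s v))); auto.
      apply functional_extensionality; intros [i|m]; simpl; auto.
    - intro p. destruct (proj2 Hq (fmap S (pmap s) p)); auto.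
    - intros r Hr. rewrite fmap_comp. apply Hpi in Hr. replace (fun v : I => pmap s (inl v)) with (@inl I N); auto. }
  exists (exist (fun q' => complete_type S I N q' /\ forall r, pi r -> q' (fmap S inl r)) (fun p => q (fmap S (pmap s) p)) Hc). simpl. tauto.
Qed.

End Typ.

Import ListNotations.

Section Good.
Variable S : signature.
Arguments TVar {S V}. Arguments TApp {S V}.
Arguments FEq {S V}. Arguments FRel {S V}. Arguments FNot {S V}.
Arguments FAnd {S V}. Arguments FEx {S V}.

Definition good (A B : structure S) (L : list (A * B)) :=
  forall n (h : Fin.t n -> A * B) (th : formula S (Fin.t n)), (forall i, In (h i) L) ->
    (sat S A (fun i => fst (h i)) th <-> sat S B (fun i => snd (h i)) th).

Definition swp {X Y : Type} (p : X * Y) : Y * X := (snd p, fst p).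

Lemma good_swap A B L : good A B L -> good B A (map swp L).
Proof.
  intros H n h th Hh. symmetry. apply (H n (fun i => swp (h i))).
  intro i. specialize (Hh i). apply in_map_iff in Hh. destruct Hh as [[x y] [E Hx]].
  unfold swp in *; simpl in *. rewrite <- E; simpl. auto.
Qed.

Lemma good_sub A B L L' : incl L L' -> good A B L' -> good A B L.
Proof. intros HL H n h th Hh; apply H; intro i; apply HL; auto. Qed.

Lemma good_nil A B : (forall s : sentence S, sat S A no_var s -> sat S B no_var s) -> good A B [].
Proof.
  intros EE n h th Hh. destruct n as [|n]; [|destruct (Hh Fin.F1)].
  set (c := fun i : Fin.t 0 => Fin.case0 (fun _ => Empty_set) i).
  assert (EA : forall (M : structure S) (e : Fin.t 0 -> M), e = fun i => no_var (c i)).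
  { intros M e; apply functional_extensionality; intro i; apply (Fin.case0 (fun i => _ = _) i). }
  rewrite (EA A (fun i => fst (h i))), (EA B (fun i => snd (h i))).
  rewrite <- (sat_fmap S A _ _ c th no_var), <- (sat_fmap S B _ _ c th no_var). split; intro H.
  - apply EE; auto.
  - apply NNPP; intro N. apply (EE (FNot (fmap S c th))) in N. apply N; auto.
Qed.

Lemma good_fun A B L a b1 b2 : good A B L -> In (a, b1) L -> In (a, b2) L -> b1 = b2.
Proof.
  intros H H1 H2.
  set (h := fun i : Fin.t 2 => Fin.caseS' i (fun _ => (A * B)%type) (a, b1) (fun _ => (a, b2))).
  specialize (H 2 h (FEq (TVar Fin.F1) (TVar (Fin.FS Fin.F1)))). simpl in H. apply H; auto.
  intro i. apply (Fin.caseS' i (fun i => In (h i) L)); simpl; auto.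
Qed.

Lemma good_inj A B L a1 a2 b : good A B L -> In (a1, b) L -> In (a2, b) L -> a1 = a2.
Proof.
  intros H H1 H2.
  set (h := fun i : Fin.t 2 => Fin.caseS' i (fun _ => (A * B)%type) (a1, b) (fun _ => (a2, b))).
  specialize (H 2 h (FEq (TVar Fin.F1) (TVar (Fin.FS Fin.F1)))). simpl in H. apply H; auto.
  intro i. apply (Fin.caseS' i (fun i => In (h i) L)); simpl; auto.
Qed.

Definition choose_opt {X : Type} (P : X -> Prop) (d : X) : X :=
  match excluded_middle_informative (exists x, P x) with
  | left H => proj1_sig (constructive_indefinite_description _ H)
  | right _ => d
  end.

Lemma choose_opt_spec {X : Type} (P : X -> Prop) d : (exists x, P x) -> P (choose_opt P d).
Proof.
  intro H; unfold choose_opt. destruct (excluded_middle_informative _) as [H'|H']; [|contradiction].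
  exact (proj2_sig (constructive_indefinite_description _ H')).
Qed.

Lemma good_ext A B L : aleph0_saturated S B -> good A B L -> forall a : A, exists b, good A B ((a, b) :: L).
Proof.
  intros Sat HL a.
  set (n := length L). set (k := lnth L).
  set (p := fun th : formula S (option (Fin.t n)) => sat S A (ext (fun i => fst (k i)) a) th).
  destruct (Sat n (fun i => snd (k i)) p) as [b Hb].
  { intros l Hl. assert (H : sat S A (fun i => fst (k i)) (FEx (conjl S l))).
    { exists a. apply sat_conjl. intros; apply Hl; auto. }
    apply (HL n k) in H; [|intro i; apply lnth_In].
    destruct H as [m Hm]. exists m. apply sat_conjl; auto. }
  exists b. intros n2 h th Hh.
  set (rho := fun i => match excluded_middle_informative (exists j, k j = h i) with
                       | left H => Some (proj1_sig (constructive_indefinite_description _ H))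
                       | right _ => None end).
  assert (Hrho : forall i, fst (h i) = ext (fun j => fst (k j)) a (rho i) /\
                           snd (h i) = ext (fun j => snd (k j)) b (rho i)).
  { intro i; unfold rho. destruct (excluded_middle_informative _) as [H|H].
    - generalize (proj2_sig (constructive_indefinite_description _ H)).
      generalize (proj1_sig (constructive_indefinite_description _ H)). intros j E. simpl. rewrite E. auto.
    - destruct (Hh i) as [E|E]. rewrite <- E; simpl; auto.
      exfalso; apply H. apply lnth_surj; auto. }
  replace (fun i => fst (h i)) with (fun i => ext (fun j => fst (k j)) a (rho i))
    by (apply functional_extensionality; intro i; symmetry; apply Hrho).
  replace (fun i => snd (h i)) with (fun i => ext (fun j => snd (k j)) b (rho i))
    by (apply functional_extensionality; intro i; symmetry; apply Hrho).
  rewrite <- (sat_fmap S A _ _ rho th (ext (fun j => fst (k j)) a)).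
  rewrite <- (sat_fmap S B _ _ rho th (ext (fun j => snd (k j)) b)). split; intro H.
  - apply Hb; auto.
  - apply NNPP; intro N. apply (Hb (FNot (fmap S rho th))) in N; auto.
Qed.

Lemma good_ext' A B L : aleph0_saturated S A -> good A B L -> forall b : B, exists a, good A B ((a, b) :: L).
Proof.
  intros Sat HL b. destruct (good_ext B A (map swp L) Sat (good_swap A B L HL) b) as [a Ha].
  exists a. apply good_swap in Ha. simpl in Ha. rewrite map_map in Ha.
  replace (map (fun x => swp (swp x)) L) with L in Ha; auto.
  clear; induction L as [|[x y] L IH]; simpl; auto; f_equal; auto.
Qed.

Lemma good_transfer (A B : structure S) (L : list (A * B)) (d : A * B) (V : Type) (E' : V -> A) (E : V -> B) (ph : formula S V) :
  good A B L -> In d L -> (forall v, In v (vars S ph) -> In (E' v, E v) L) ->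
  (sat S A E' ph <-> sat S B E ph).
Proof.
  intros HL Hd Hv.
  set (vs := vars S ph).
  set (h := fun i : Fin.t (Datatypes.S (length vs)) => Fin.caseS' i (fun _ => (A * B)%type) d
                 (fun j => (E' (lnth vs j), E (lnth vs j)))).
  set (rho := fun v => match excluded_middle_informative (exists j, lnth vs j = v) with
                       | left H => Fin.FS (proj1_sig (constructive_indefinite_description _ H))
                       | right _ => Fin.F1 end).
  assert (Hr : forall v, In v vs -> fst (h (rho v)) = E' v /\ snd (h (rho v)) = E v).
  { intros v Hvs; unfold rho. destruct (excluded_middle_informative _) as [H|H].
    - generalize (proj2_sig (constructive_indefinite_description _ H)).
      generalize (proj1_sig (constructive_indefinite_description _ H)). intros j E0. simpl. rewrite E0. auto.
    - exfalso; apply H, lnth_surj; auto. }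
  rewrite (sat_supp S A V ph E' (fun v => fst (h (rho v)))) by (intros v Hvs; symmetry; apply Hr; auto).
  rewrite (sat_supp S B V ph E (fun v => snd (h (rho v)))) by (intros v Hvs; symmetry; apply Hr; auto).
  rewrite <- (sat_fmap S A _ _ rho ph (fun i => fst (h i))), <- (sat_fmap S B _ _ rho ph (fun i => snd (h i))).
  apply HL. intro i. apply (Fin.caseS' i (fun i => In (h i) L)); simpl; auto.
  intro j. apply Hv. apply lnth_In.
Qed.

End Good.

Open Scope R_scope.
Import ListNotations.

Lemma set_ext {X : Type} (A B : X -> Prop) : (forall x, A x <-> B x) -> A = B.
Proof. intro H; apply functional_extensionality; intro x; apply propositional_extensionality; auto. Qed.

Section MuFacts.
Variables (Sig : signature) (I : Type) (pi : formula Sig I -> Prop) (N : structure Sig).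
Variable mu : (Spi Sig I pi N -> Prop) -> R.
Hypothesis Hmu : regular_borel_prob Sig I pi N mu.

Lemma borel_open U : sopen Sig I pi N U -> borel Sig I pi N U.
Proof. intros H C HO HC HU; apply HO; auto. Qed.

Lemma borel_compl A : borel Sig I pi N A -> borel Sig I pi N (fun q => ~ A q).
Proof. intros H C HO HC HU; apply HC; apply H; auto. Qed.

Lemma borel_union2 A B : borel Sig I pi N A -> borel Sig I pi N B -> borel Sig I pi N (fun q => A q \/ B q).
Proof.
  intros HA HB. set (F := fun n : nat => match n with O => A | _ => B end).
  replace (fun q => A q \/ B q) with (fun q => exists n, F n q).
  intros C HO HC HU. apply HU. intros [|n]; simpl; [apply HA|apply HB]; auto.
  apply set_ext; intro q; split. intros [[|n] H]; auto. intros [H|H]; [exists O|exists 1%nat]; auto.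
Qed.

Lemma borel_inter A B : borel Sig I pi N A -> borel Sig I pi N B -> borel Sig I pi N (fun q => A q /\ B q).
Proof.
  intros HA HB. replace (fun q => A q /\ B q) with (fun q => ~ ((fun q => ~ A q) q \/ (fun q => ~ B q) q)).
  apply borel_compl, borel_union2; apply borel_compl; auto.
  apply set_ext; intro q; tauto.
Qed.

Lemma mu_empty : mu (fun _ => False) = 0.
Proof.
  destruct Hmu as [_ [_ [Hc _]]].
  specialize (Hc (fun _ _ => False)). simpl in Hc.
  replace (fun q : Spi Sig I pi N => exists n : nat, False) with (fun _ : Spi Sig I pi N => False) in Hc
    by (apply set_ext; intro q; split; [intros []|intros [_ []]]).
  set (c := mu (fun _ => False)) in *.
  assert (E : forall n, sum_f_R0 (fun _ => c) n = INR (S n) * c).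
  { induction n; simpl sum_f_R0. simpl; ring. rewrite IHn. rewrite !S_INR. ring. }
  assert (H : forall eps, eps > 0 -> Rabs c < eps).
  { intros eps He. destruct (Hc (fun _ => borel_open _ (fun q H => False_ind _ H)) (fun _ _ _ _ H _ => H) eps He) as [K HK].
    specialize (HK (S K) (le_S _ _ (le_n K))). unfold R_dist in HK. rewrite E in HK.
    replace (INR (S (S K)) * c - c) with (INR (S K) * c) in HK by (rewrite (S_INR (S K)); ring).
    rewrite Rabs_mult, Rabs_right in HK by (apply Rle_ge, pos_INR).
    assert (1 <= INR (S K)) by (rewrite S_INR; pose proof (pos_INR K); lra).
    pose proof (Rabs_pos c). nra. }
  apply NNPP; intro Hn. assert (0 < Rabs c) by (apply Rabs_pos_lt; auto).
  specialize (H (Rabs c) H0). lra.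
Qed.

Lemma mu_add2 A B : borel Sig I pi N A -> borel Sig I pi N B -> (forall q, A q -> B q -> False) ->
  mu (fun q => A q \/ B q) = mu A + mu B.
Proof.
  intros HA HB HD. pose proof mu_empty as E0. destruct Hmu as [_ [_ [Hc _]]].
  set (F := fun n : nat => match n with O => A | 1%nat => B | _ => fun _ => False end).
  assert (HF : forall n, borel Sig I pi N (F n)).
  { intros [|[|n]]; simpl; auto. apply borel_open; intros q []. }
  assert (HFD : forall n m q, n <> m -> F n q -> F m q -> False).
  { intros [|[|n]] [|[|m]] q Hnm; simpl; try tauto; intros; eauto. }
  specialize (Hc F HF HFD).
  replace (fun q => exists n, F n q) with (fun q => A q \/ B q) in Hc.
  2:{ apply set_ext; intro q; split. intros [H|H]; [exists O|exists 1%nat]; auto.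
      intros [[|[|n]] H]; simpl in H; tauto. }
  assert (Hs : forall n, sum_f_R0 (fun n => mu (F n)) (S n) = mu A + mu B).
  { induction n; simpl in *; auto. rewrite IHn. simpl. rewrite E0. ring. }
  assert (Hc2 : Un_cv (sum_f_R0 (fun n => mu (F n))) (mu A + mu B)).
  { intros eps He. exists 1%nat. intros n Hn. destruct n; [inversion Hn|]. rewrite Hs. unfold R_dist.
    rewrite Rminus_diag, Rabs_R0; auto. }
  apply (UL_sequence _ _ _ Hc Hc2).
Qed.

Lemma mu_ge0 A : borel Sig I pi N A -> 0 <= mu A.
Proof. apply Hmu. Qed.

Lemma mu_mono A B : borel Sig I pi N A -> borel Sig I pi N B -> (forall q, A q -> B q) -> mu A <= mu B.
Proof.
  intros HA HB H.
  replace B with (fun q => A q \/ (fun q => B q /\ ~ A q) q).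
  rewrite mu_add2; auto. pose proof (mu_ge0 (fun q => B q /\ ~ A q)). 
  assert (0 <= mu (fun q => B q /\ ~ A q)) by (apply H0, borel_inter; auto; apply borel_compl; auto). lra.
  apply borel_inter; auto; apply borel_compl; auto.
  intros q H1 [_ H2]; auto.
  apply set_ext; intro q; split. intros [Hq|[Hq _]]; auto. intro Hq; destruct (classic (A q)); auto.
Qed.

Lemma mu_whole : mu (fun _ => True) = 1.
Proof. apply Hmu. Qed.

End MuFacts.

Import ListNotations.

Section VarsFmap.
Variable Sig : signature.
Lemma tvars_tmap V W (h : V -> W) (t : term Sig V) v : In v (tvars Sig (tmap Sig h t)) -> exists w, In w (tvars Sig t) /\ v = h w.
Proof.
  induction t as [x|f args IH]; simpl; intro H.
  - destruct H as [<-|[]]. exists x; auto.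
  - apply in_flat_map in H. destruct H as [i [_ Hi]]. destruct (IH i Hi) as [w [Hw ->]].
    exists w; split; auto. apply in_flat_map. exists i; split; auto. apply fin_all_In.
Qed.

Lemma vars_fmap V W (h : V -> W) (p : formula Sig V) : forall v, In v (vars Sig (fmap Sig h p)) -> exists w, In w (vars Sig p) /\ v = h w.
Proof.
  revert W h; induction p as [V t u|V r args|V p IH|V p IHp q IHq|V p IH]; intros W h v; simpl; intro H.
  - apply in_app_or in H. destruct H as [H|H]; apply tvars_tmap in H; destruct H as [w [Hw ->]];
    exists w; split; auto; apply in_or_app; auto.
  - apply in_flat_map in H. destruct H as [i [_ Hi]]. apply tvars_tmap in Hi. destruct Hi as [w [Hw ->]].
    exists w; split; auto. apply in_flat_map. exists i; split; auto. apply fin_all_In.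
  - apply IH; auto.
  - apply in_app_or in H. destruct H as [H|H]; [apply IHp in H|apply IHq in H]; destruct H as [w [Hw ->]];
    exists w; split; auto; apply in_or_app; auto.
  - apply in_flat_map in H. destruct H as [o [Ho Hv]]. destruct o as [x|]; simpl in Hv; [|destruct Hv].
    destruct Hv as [<-|[]]. apply IH in Ho. destruct Ho as [[w|] [Hw E]]; simpl in E; inversion E; subst.
    exists w; split; auto. apply in_flat_map. exists (Some w); simpl; auto.
Qed.
End VarsFmap.

Section Main.
Variables (Sig : signature) (T : sentence Sig -> Prop) (I : Type) (pi : formula Sig I -> Prop) (M M' : structure Sig).
Hypothesis HT : complete_theory Sig T.
Hypothesis HMT : models Sig M T.
Hypothesis HM'T : models Sig M' T.
Hypothesis satM : aleph0_saturated Sig M.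
Hypothesis satM' : aleph0_saturated Sig M'.
Hypothesis homM : strongly_aleph0_homogeneous Sig M.
Variable mu : (Spi Sig I pi M -> Prop) -> R.
Hypothesis Hmu : regular_borel_prob Sig I pi M mu.
Hypothesis Hinv : aut_invariant Sig I pi M mu.

Arguments TVar {S V}. Arguments TApp {S V}.
Arguments FEq {S V}. Arguments FRel {S V}. Arguments FNot {S V}.
Arguments FAnd {S V}. Arguments FEx {S V}.

Lemma EE : forall s : sentence Sig, sat Sig M' no_var s -> sat Sig M no_var s.
Proof.
  intros s H. destruct HT as [_ Hc]. destruct (Hc s) as [H1|H1]. apply H1; auto.
  exfalso. apply (H1 M' HM'T); auto.
Qed.

Definition m0 : M := epsilon (carrier_inh Sig M) (fun _ => True).
Definition m0' : M' := epsilon (carrier_inh Sig M') (fun _ => True).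

Definition okL (L : list (M' * M)) := good Sig M' M L /\ L <> [].
Definition gL (L : list (M' * M)) (x : M') : M := choose_opt (fun b => In (x, b) L) m0.
Definition hL (L : list (M' * M)) (y : M) : M' := choose_opt (fun a => In (a, y) L) m0'.
Definition pmapg (g : M' -> M) (v : I + M') : I + M := match v with inl i => inl i | inr m => inr (g m) end.
Definition tr L (p : formula Sig (I + M')) := fmap Sig (pmapg (gL L)) p.
Definition covers (L : list (M' * M)) (p : formula Sig (I + M')) :=
  forall m, In (inr m) (vars Sig p) -> exists b, In (m, b) L.

Lemma gL_spec L x : (exists b, In (x, b) L) -> In (x, gL L x) L.
Proof. apply (choose_opt_spec (fun b => In (x, b) L)). Qed.
Lemma hL_spec L y : (exists a, In (a, y) L) -> In (hL L y, y) L.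
Proof. apply (choose_opt_spec (fun a => In (a, y) L)). Qed.

Lemma okL_d L : okL L -> exists d, In d L.
Proof. intros [_ H]; destruct L as [|d L]; [contradiction|exists d; left; auto]. Qed.

Lemma ext_list L : okL L -> forall ms : list M', exists L', okL L' /\ incl L L' /\
  forall m, In m ms -> exists b, In (m, b) L'.
Proof.
  intros HL ms; induction ms as [|m ms IH].
  - exists L; split; auto; split; [apply incl_refl|intros m []].
  - destruct IH as [L1 [[G1 N1] [I1 C1]]].
    destruct (good_ext Sig M' M L1 satM G1 m) as [b Hb].
    exists ((m, b) :: L1). split; [split; [auto|discriminate]|split].
    + intros x Hx; right; auto.
    + intros x [<-|Hx]. exists b; left; auto. destruct (C1 x Hx) as [b' Hb']; exists b'; right; auto.
Qed.

Lemma ext_list' L : okL L -> forall bs : list M, exists L', okL L' /\ incl L L' /\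
  forall b, In b bs -> exists a, In (a, b) L'.
Proof.
  intros HL bs; induction bs as [|b bs IH].
  - exists L; split; auto; split; [apply incl_refl|intros m []].
  - destruct IH as [L1 [[G1 N1] [I1 C1]]].
    destruct (good_ext' Sig M' M L1 satM' G1 b) as [a Ha].
    exists ((a, b) :: L1). split; [split; [auto|discriminate]|split].
    + intros x Hx; right; auto.
    + intros x [<-|Hx]. exists a; left; auto. destruct (C1 x Hx) as [a' Ha']; exists a'; right; auto.
Qed.

Lemma init_L : exists L, okL L.
Proof.
  destruct (good_ext Sig M' M [] satM (good_nil Sig M' M EE) m0') as [b Hb].
  exists [(m0', b)]; split; auto; discriminate.
Qed.

Definition ivars (l : list (formula Sig (I + M'))) : list I :=
  flat_map (fun p => flat_map (fun v => match v with inl i => [i] | inr _ => [] end) (vars Sig p)) l.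

Lemma ivars_spec l p i : In p l -> In (inl i) (vars Sig p) -> In i (ivars l).
Proof.
  intros Hp Hi. apply in_flat_map. exists p; split; auto. apply in_flat_map. exists (inl i); simpl; auto.
Qed.

Lemma KT L l : okL L -> (forall p, In p l -> covers L p) ->
  ((exists a' : I -> M', forall p, In p l -> sat Sig M' (penv Sig M' a') p) <->
   (exists a : I -> M, forall p, In p l -> sat Sig M (penv Sig M a) (tr L p))).
Proof.
  intros HL Hc. split.
  - intros [a' Ha']. destruct (ext_list L HL (map a' (ivars l))) as [L' [[G' N'] [I' C']]].
    destruct (okL_d L HL) as [d Hd].
    exists (fun i => gL L' (a' i)). intros p Hp. unfold tr. rewrite sat_fmap.
    apply (good_transfer Sig M' M L' d (I + M') (penv Sig M' a')); auto.
    intros [i|m] Hv; simpl.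
    + apply gL_spec. apply C'. apply in_map. apply (ivars_spec l p); auto.
    + apply I'. apply gL_spec. apply (Hc p Hp); auto.
  - intros [a Ha]. destruct (ext_list' L HL (map a (ivars l))) as [L' [[G' N'] [I' C']]].
    destruct (okL_d L HL) as [d Hd].
    exists (fun i => hL L' (a i)). intros p Hp. specialize (Ha p Hp). unfold tr in Ha. rewrite sat_fmap in Ha.
    apply (good_transfer Sig M' M L' d (I + M') (penv Sig M' (fun i => hL L' (a i))) (fun v => penv Sig M a (pmapg (gL L) v)) p); auto.
    intros [i|m] Hv; simpl.
    + apply hL_spec. apply C'. apply in_map. apply (ivars_spec l p); auto.
    + apply I'. apply gL_spec. apply (Hc p Hp); auto.
Qed.

Definition pl (p : formula Sig (I + M')) : list M' :=
  flat_map (fun v => match v with inr m => [m] | inl _ => [] end) (vars Sig p).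

Lemma pl_spec p m : In m (pl p) <-> In (inr m) (vars Sig p).
Proof.
  unfold pl; rewrite in_flat_map. split.
  - intros [[i|x] [Hx Hm]]; simpl in Hm; [destruct Hm|]. destruct Hm as [<-|[]]; auto.
  - intro H; exists (inr m); simpl; auto.
Qed.

Lemma exL p : exists L, okL L /\ covers L p.
Proof.
  destruct init_L as [L0 H0]. destruct (ext_list L0 H0 (pl p)) as [L [HL [_ HC]]].
  exists L; split; auto. intros m Hm; apply HC, pl_spec; auto.
Qed.

Definition Lp p := proj1_sig (constructive_indefinite_description _ (exL p)).
Lemma Lp_spec p : okL (Lp p) /\ covers (Lp p) p.
Proof. exact (proj2_sig (constructive_indefinite_description _ (exL p))). Qed.

Definition clop (r : formula Sig (I + M)) : Spi Sig I pi M -> Prop := fun q => proj1_sig q r.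
Definition val p := mu (clop (tr (Lp p) p)).

Lemma clop_borel r : borel Sig I pi M (clop r).
Proof. apply borel_open. intros q H; exists r; split; auto. Qed.

Lemma clop_eq r1 r2 : (forall a, sat Sig M (penv Sig M a) r1 <-> sat Sig M (penv Sig M a) r2) -> clop r1 = clop r2.
Proof.
  intro H. apply set_ext; intro q. pose proof (proj1 (proj2_sig q)) as Hq; unfold clop.
  split; apply ct_imp; auto; intros a; apply H.
Qed.

Lemma fmap_equiv (N : structure Sig) V W (h1 h2 : V -> W) (p : formula Sig V) :
  (forall v, In v (vars Sig p) -> h1 v = h2 v) -> forall e : W -> N, sat Sig N e (fmap Sig h1 p) <-> sat Sig N e (fmap Sig h2 p).
Proof.
  intros H e. rewrite !sat_fmap. apply sat_supp. intros v Hv; rewrite H; auto.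
Qed.

Lemma val_any L p : okL L -> covers L p -> val p = mu (clop (tr L p)).
Proof.
  intros HL Hc. destruct (Lp_spec p) as [HL1 Hc1]. unfold val. set (L1 := Lp p) in *.
  set (ps := pl p). set (n := length ps).
  set (a := fun i => gL L (lnth ps i)). set (b := fun i => gL L1 (lnth ps i)).
  assert (Hin : forall L, okL L -> covers L p -> forall i, In (lnth ps i, gL L (lnth ps i)) L).
  { intros L' HL' Hc' i. apply gL_spec, Hc', pl_spec, lnth_In. }
  assert (Hab : forall th, sat Sig M b th <-> sat Sig M a th).
  { intro th. destruct (okL_d L HL) as [d Hd]. destruct (okL_d L1 HL1) as [d1 Hd1].
    apply iff_trans with (sat Sig M' (lnth ps) th).
    - symmetry. apply (good_transfer Sig M' M L1 d1 (Fin.t n) (lnth ps) b th); [apply HL1|auto|intros; apply Hin; auto].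
    - apply (good_transfer Sig M' M L d (Fin.t n) (lnth ps) a th); [apply HL|auto|intros; apply Hin; auto]. }
  destruct (homM n b a Hab) as [s [Hs Hsab]].
  assert (Hsp : forall m, In m ps -> s (gL L1 m) = gL L m).
  { intros m Hm. destruct (lnth_surj ps m Hm) as [i <-]. apply Hsab. }
  rewrite <- (Hinv s Hs (clop (tr L p)) (clop_borel _)). f_equal.
  destruct (aut_inv Sig M s Hs) as [t [Ht [ts st]]].
  assert (Heq1 : clop (fmap Sig (pmap s) (tr L1 p)) = clop (tr L p)).
  { apply clop_eq; intro e. unfold tr. rewrite fmap_comp. apply fmap_equiv.
    intros [i|m] Hv; simpl; auto. f_equal. apply Hsp, pl_spec; auto. }
  assert (Heq2 : clop (fmap Sig (pmap t) (tr L p)) = clop (tr L1 p)).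
  { apply clop_eq; intro e. unfold tr. rewrite fmap_comp. apply fmap_equiv.
    intros [i|m] Hv; simpl; auto. f_equal. rewrite <- Hsp, ts; auto. apply pl_spec; auto. }
  apply set_ext; intro q. split.
  - intro Hq. destruct (act_spi Sig I pi M t Ht q) as [q' Hq'].
    exists q'. split.
    + unfold clop. rewrite <- Hq'. change (clop (fmap Sig (pmap t) (tr L p)) q). rewrite Heq2. exact Hq.
    + intro r. rewrite <- Hq'. rewrite fmap_comp.
      replace (fmap Sig (fun v => pmap t (pmap s v)) r) with r; [tauto|].
      rewrite <- (fmap_id Sig _ r) at 1. apply fmap_ext. intros [i|m]; simpl; rewrite ?ts; auto.
  - intros [q' [Hq' R]]. change (clop (tr L1 p) q). unfold clop. apply R.
    change (clop (fmap Sig (pmap s) (tr L1 p)) q'). rewrite Heq1. exact Hq'.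
Qed.

Lemma tr_inl L r : tr L (fmap Sig inl r) = fmap Sig inl r.
Proof. unfold tr. rewrite fmap_comp. apply fmap_ext. intro v; reflexivity. Qed.

Lemma covers_inl L r : covers L (fmap Sig inl r).
Proof. intros m Hm. apply vars_fmap in Hm. destruct Hm as [w [_ E]]. discriminate. Qed.

Lemma val_mono p r : (forall q : Spi Sig I pi M', proj1_sig q p -> proj1_sig q r) -> val p <= val r.
Proof.
  intro H. destruct (exL (FAnd p r)) as [L [HL Hc]].
  assert (Hcp : covers L p) by (intros m Hm; apply Hc; simpl; apply in_or_app; auto).
  assert (Hcr : covers L r) by (intros m Hm; apply Hc; simpl; apply in_or_app; auto).
  rewrite (val_any L p HL Hcp), (val_any L r HL Hcr).
  apply (mu_mono Sig I pi M mu Hmu); [apply clop_borel|apply clop_borel|].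
  intros q Hq. apply NNPP; intro Hn.
  pose proof (proj1 (proj2_sig q)) as Hq0.
  assert (Hnr : proj1_sig q (FNot (tr L r))) by (apply (ct_neg Sig I M); auto).
  destruct (spi_of Sig I pi M' (fun x => x = p \/ x = FNot r)) as [q'' Hq''].
  - intros l Hl. apply (KT L l HL).
    + intros x Hx. destruct (Hl x Hx) as [[->| ->]|[r0 [_ ->]]]; auto. apply covers_inl.
    + destruct (ct_sat Sig I M _ Hq0 (map (tr L) l)) as [a Ha].
      * intros y Hy. apply in_map_iff in Hy. destruct Hy as [x [<- Hx]].
        destruct (Hl x Hx) as [[->| ->]|[r0 [Hr0 ->]]]; auto. rewrite tr_inl. apply (proj2 (proj2_sig q)); auto.
      * exists a. intros x Hx. apply Ha. apply in_map; auto.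
  - pose proof (proj1 (proj2_sig q'')) as Hq1.
    apply (proj1 (ct_neg Sig I M' _ Hq1 r)); auto.
Qed.

Lemma val_add p r : val p = val (FAnd p r) + val (FAnd p (FNot r)).
Proof.
  destruct (exL (FAnd p r)) as [L [HL Hc]].
  assert (Hcp : covers L p) by (intros m Hm; apply Hc; simpl; apply in_or_app; auto).
  rewrite (val_any L p HL Hcp), (val_any L (FAnd p r) HL Hc), (val_any L (FAnd p (FNot r)) HL Hc).
  rewrite <- (mu_add2 Sig I pi M mu Hmu); [|apply clop_borel|apply clop_borel|].
  - f_equal. apply set_ext; intro q. pose proof (proj1 (proj2_sig q)) as Hq0. unfold clop, tr; simpl.
    rewrite !(ct_and Sig I M _ Hq0), (ct_neg Sig I M _ Hq0). tauto.
  - intros q. pose proof (proj1 (proj2_sig q)) as Hq0. unfold clop, tr; simpl.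
    rewrite !(ct_and Sig I M _ Hq0), (ct_neg Sig I M _ Hq0). tauto.
Qed.

Lemma val_top : val (top0 Sig) = 1.
Proof.
  unfold val. replace (tr (Lp (top0 Sig)) (top0 Sig)) with (@top0 Sig (I + M)) by reflexivity.
  rewrite <- (mu_whole Sig I pi M mu Hmu). f_equal. apply set_ext; intro q; split; auto.
  intros _. unfold clop. apply (ct_true Sig I M _ (proj1 (proj2_sig q))). intro a; apply sat_top0.
Qed.

Lemma val_ge0 p : 0 <= val p.
Proof. apply (mu_ge0 Sig I pi M mu Hmu), clop_borel. Qed.

Lemma val_inv s p : automorphism Sig M' s -> val (fmap Sig (pmap s) p) = val p.
Proof.
  intro Hs. destruct (Lp_spec p) as [HL Hc]. unfold val at 2. set (L := Lp p) in *.
  set (Ls := map (fun pr : M' * M => (s (fst pr), snd pr)) L).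
  assert (HLs : okL Ls).
  { split.
    - intros n h th Hh.
      assert (H : forall i, exists pr, In pr L /\ h i = (s (fst pr), snd pr)).
      { intro i. destruct (proj1 (in_map_iff _ _ _) (Hh i)) as [x [E Hx]]. exists x; auto. }
      set (h0 := fun i => proj1_sig (constructive_indefinite_description _ (H i))).
      assert (H0 : forall i, In (h0 i) L /\ h i = (s (fst (h0 i)), snd (h0 i)))
        by (intro i; exact (proj2_sig (constructive_indefinite_description _ (H i)))).
      replace (fun i => fst (h i)) with (fun i => s (fst (h0 i)))
        by (apply functional_extensionality; intro i; rewrite (proj2 (H0 i)); auto).
      replace (fun i => snd (h i)) with (fun i => snd (h0 i))
        by (apply functional_extensionality; intro i; rewrite (proj2 (H0 i)); auto).
      rewrite (sat_aut Sig M' s Hs). apply (proj1 HL). intro i; apply H0.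
    - destruct HL as [_ HL]. unfold Ls; destruct L; [contradiction|discriminate]. }
  assert (Hcs : covers Ls (fmap Sig (pmap s) p)).
  { intros m Hm. apply vars_fmap in Hm. destruct Hm as [[i|x] [Hx E]]; simpl in E; [discriminate|].
    inversion E; subst. destruct (Hc x Hx) as [b Hb]. exists b. apply (in_map (fun pr : M' * M => (s (fst pr), snd pr)) L (x, b)); auto. }
  rewrite (val_any Ls _ HLs Hcs). f_equal. apply clop_eq. intro e. unfold tr. rewrite fmap_comp. apply fmap_equiv.
  intros [i|x] Hv; simpl; auto. f_equal.
  assert (H1 : In (s x, gL Ls (s x)) Ls).
  { apply gL_spec. destruct (Hc x Hv) as [b Hb]. exists b. apply (in_map (fun pr : M' * M => (s (fst pr), snd pr)) L (x, b)); auto. }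
  apply in_map_iff in H1. destruct H1 as [[x' b'] [E Hin]]. simpl in E. inversion E.
  destruct Hs as [Hinj _]. apply Hinj in H0. subst x'.
  apply (good_fun Sig M' M L x); [apply HL| |apply gL_spec; apply Hc; auto]. rewrite <- H1; auto.
Qed.

Lemma compactX (Sg : formula Sig (I + M') -> Prop) :
  (forall l, (forall x, In x l -> Sg x) -> exists q : Spi Sig I pi M', forall x, In x l -> proj1_sig q x) ->
  exists q : Spi Sig I pi M', forall x, Sg x -> proj1_sig q x.
Proof.
  intro H. apply spi_of. intros l Hl.
  assert (R : exists l', (forall x, In x l' -> Sg x) /\
             forall q : Spi Sig I pi M', (forall x, In x l' -> proj1_sig q x) -> forall x, In x l -> proj1_sig q x).
  { clear H. induction l as [|y l IH].
    - exists []; split; [intros x []|intros q _ x []].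
    - destruct IH as [l' [H1 H2]]. intros x Hx; apply Hl; right; auto.
      destruct (Hl y (or_introl eq_refl)) as [Sy|[r [Hr ->]]].
      + exists (y :: l'); split. intros x [<-|Hx]; auto.
        intros q Hq x [<-|Hx]. apply Hq; left; auto. apply H2; auto. intros; apply Hq; right; auto.
      + exists l'; split; auto. intros q Hq x [<-|Hx]. apply (proj2 (proj2_sig q)); auto. apply H2; auto. }
  destruct R as [l' [H1 H2]]. destruct (H l' H1) as [q Hq].
  apply (ct_sat Sig I M' _ (proj1 (proj2_sig q))). apply H2; auto.
Qed.

End Main.

Theorem proposition3p3 (S : signature) (T : sentence S -> Prop) (I : Type)
  (pi : formula S I -> Prop) (M M' : structure S) :
  complete_theory S T -> partial_type S T I pi ->
  models S M T -> aleph0_saturated S M -> strongly_aleph0_homogeneous S M ->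
  models S M' T -> aleph0_saturated S M' -> strongly_aleph0_homogeneous S M' ->
  (exists mu : (Spi S I pi M -> Prop) -> R,
      regular_borel_prob S I pi M mu /\ aut_invariant S I pi M mu) ->
  exists mu' : (Spi S I pi M' -> Prop) -> R,
      regular_borel_prob S I pi M' mu' /\ aut_invariant S I pi M' mu'.
Proof.
  intros HT Hpi HMT satM homM HM'T satM' homM' [mu [Hmu Hinv]].
  pose (mem := fun (q : Spi S I pi M') (p : formula S (I + M')) => proj1_sig q p).
  pose (lam := val S T I pi M M' HT HMT HM'T satM mu).
  assert (mem_neg : forall q p, mem q (FNot S _ p) <-> ~ mem q p).
  { intros q p; exact (ct_neg S I M' _ (proj1 (proj2_sig q)) p). }
  assert (mem_conj : forall q p r, mem q (FAnd S _ p r) <-> mem q p /\ mem q r).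
  { intros q p r; exact (ct_and S I M' _ (proj1 (proj2_sig q)) p r). }
  assert (mem_top : forall q, mem q (top0 S)).
  { intro q. apply (ct_true S I M' _ (proj1 (proj2_sig q))). intro a; apply sat_top0. }
  assert (compact : forall Sg : formula S (I + M') -> Prop,
    (forall l, (forall p, List.In p l -> Sg p) -> exists q, forall p, List.In p l -> mem q p) ->
    exists q, forall p, Sg p -> mem q p).
  { intros Sg H; exact (compactX S I pi M' Sg H). }
  assert (lam_ge0 : forall p, 0 <= lam p) by (intro p; exact (val_ge0 S T I pi M M' HT HMT HM'T satM mu Hmu p)).
  assert (lam_top : lam (top0 S) = 1) by exact (val_top S T I pi M M' HT HMT HM'T satM mu Hmu).
  assert (lam_mono : forall p r, (forall q, mem q p -> mem q r) -> lam p <= lam r).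
  { intros p r H; exact (val_mono S T I pi M M' HT HMT HM'T satM satM' homM mu Hmu Hinv p r H). }
  assert (lam_add : forall p r, lam p = lam (FAnd S _ p r) + lam (FAnd S _ p (FNot S _ r))).
  { intros p r; exact (val_add S T I pi M M' HT HMT HM'T satM homM mu Hmu Hinv p r). }
  exists (mus _ _ mem (FNot S _) (top0 S) mem_neg mem_top lam lam_ge0 lam_top lam_mono).
  split.
  - exact (gen_measure _ _ mem (FNot S _) (FAnd S _) (top0 S) mem_neg mem_conj mem_top compact lam lam_ge0 lam_top lam_mono lam_add).
  - intros s Hs B HB. destruct (aut_inv S M' s Hs) as [t [Ht [ts st]]].
    apply (mus_img _ _ mem (FNot S _) (top0 S) mem_neg mem_top lam lam_ge0 lam_top lam_mono
             (fmap S (pmap s)) (fmap S (pmap t))).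
    + intro p; exact (val_inv S T I pi M M' HT HMT HM'T satM homM mu Hinv s p Hs).
    + intro p; exact (val_inv S T I pi M M' HT HMT HM'T satM homM mu Hinv t p Ht).
    + intros q p. unfold mem. rewrite fmap_comp.
      replace (fmap S (fun v => pmap s (pmap t v)) p) with p; [tauto|].
      rewrite <- (fmap_id S _ p) at 1. apply fmap_ext. intros [i|m]; simpl; rewrite ?st; auto.
    + intros q p. unfold mem. rewrite fmap_comp.
      replace (fmap S (fun v => pmap t (pmap s v)) p) with p; [tauto|].
      rewrite <- (fmap_id S _ p) at 1. apply fmap_ext. intros [i|m]; simpl; rewrite ?ts; auto.
    + intro q'. exact (act_spi S I pi M' s Hs q').
    + intro q'. exact (act_spi S I pi M' t Ht q').
    + intros q q' H. apply spi_ext; auto.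
Qed.
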